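(* For all complex $q$ with $|q|<1$, $$F^{\rm ed}_{\rm od}(-q)=-\frac{q\,(q;q)_\infty(-q^2;q^2)_\infty}{(q^2;q^2)_\infty^2}\sum_{n=0}^\infty\sum_{m=0}^\infty(-1)^m q^{\frac{n(n+3)}{2}+2nm+2m^2+2m}\left(1+q^{2m+1}\right).$$
   Context: For $n\in\mathbb N_0\cup\{\infty\}$, $(a;q)_n:=\prod_{j=0}^{n-1}(1-aq^j)$. Define $$F^{\rm ed}_{\rm od}(q):=\sum_{n=0}^\infty q^{2n+1}(-q;q^2)_n(-q^{2n+2};q^2)_\infty,$$ and $F^{\rm ed}_{\rm od}(-q)$ denotes this function evaluated at $-q$. *)

(* Defs.v *)
From Stdlib Require Import Reals Lra Lia ClassicalEpsilon.
Open Scope R_scope.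

Definition Cpx : Type := (R * R)%type.
Definition Cz0 : Cpx := (0, 0).
Definition Cone : Cpx := (1, 0).
Definition Cadd (z w : Cpx) : Cpx := (fst z + fst w, snd z + snd w).
Definition Copp (z : Cpx) : Cpx := (- fst z, - snd z).
Definition Csub (z w : Cpx) : Cpx := Cadd z (Copp w).
Definition Cmul (z w : Cpx) : Cpx :=
  (fst z * fst w - snd z * snd w, fst z * snd w + snd z * fst w).
Definition Cinv (z : Cpx) : Cpx :=
  (fst z / (fst z ^ 2 + snd z ^ 2), - snd z / (fst z ^ 2 + snd z ^ 2)).
Definition Cdiv (z w : Cpx) : Cpx := Cmul z (Cinv w).
Definition Cnorm (z : Cpx) : R := sqrt (fst z ^ 2 + snd z ^ 2).
Fixpoint Cpow (z : Cpx) (n : nat) : Cpx :=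
  match n with O => Cone | S k => Cmul z (Cpow z k) end.

Definition C_cv (u : nat -> Cpx) (l : Cpx) : Prop :=
  forall eps : R, eps > 0 -> exists N : nat, forall n : nat, (n >= N)%nat ->
    Cnorm (Csub (u n) l) < eps.

(* the limit of a sequence (chosen by classical choice; Cz0 if none exists) *)
Definition Clim (u : nat -> Cpx) : Cpx :=
  epsilon (inhabits Cz0) (fun l => C_cv u l).

Fixpoint Cpsum (f : nat -> Cpx) (n : nat) : Cpx :=
  match n with O => Cz0 | S k => Cadd (Cpsum f k) (f k) end.
Definition Csum (f : nat -> Cpx) : Cpx := Clim (Cpsum f).

Fixpoint qpoch (a q : Cpx) (n : nat) : Cpx :=
  match n with O => Cone | S k => Cmul (qpoch a q k) (Csub Cone (Cmul a (Cpow q k))) end.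
Definition qpoch_inf (a q : Cpx) : Cpx := Clim (qpoch a q).

Definition F_ed_od (q : Cpx) : Cpx :=
  Csum (fun n => Cmul (Cpow q (2 * n + 1))
                  (Cmul (qpoch (Copp q) (Cpow q 2) n)
                        (qpoch_inf (Copp (Cpow q (2 * n + 2))) (Cpow q 2)))).

(* Main.v *)
From Stdlib Require Import Reals Lra Lia ClassicalEpsilon FunctionalExtensionality.
From Coquelicot Require Import Coquelicot.
Require Import Defs.
Open Scope R_scope.

Lemma DCpow_eq (z : C) (n : nat) : Defs.Cpow z n = Complex.Cpow z n.
Proof. induction n; simpl; [reflexivity| rewrite IHn; reflexivity]. Qed.

Ltac toC := unfold Csub, Cdiv in *; try change Cz0 with (RtoC 0) in *; try change Cone with (RtoC 1) in *;
  try change Cadd with Cplus in *;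
  try change Cmul with Cmult in *; try change Defs.Copp with Complex.Copp in *;
  try change Defs.Cinv with Complex.Cinv in *; try change Cnorm with Cmod in *;
  rewrite ?DCpow_eq in *; try change Cpx with C; try change (prod R R) with C.

Definition cv (u : nat -> C) (l : C) : Prop :=
  forall eps : R, eps > 0 -> exists N : nat, forall n : nat, (n >= N)%nat ->
    Cmod (u n - l)%C < eps.

Lemma cv_C_cv u l : cv u l -> C_cv u l.
Proof. intro H. exact H. Qed.

Lemma Cmod_sub_sym (a b : C) : Cmod (a - b)%C = Cmod (b - a)%C.
Proof. replace (a - b)%C with (- (b - a))%C by ring. apply Cmod_opp. Qed.

Lemma Cmod_tri3 (a b c : C) : Cmod (a - c)%C <= Cmod (a - b)%C + Cmod (b - c)%C.
Proof. replace (a - c)%C with ((a - b) + (b - c))%C by ring. apply Cmod_triangle. Qed.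

Lemma Cmod_zero_eq (a b : C) : (forall e, e > 0 -> Cmod (a - b)%C < e) -> a = b.
Proof.
  intro H.
  assert (Cmod (a - b)%C = 0).
  { destruct (Rle_lt_or_eq_dec 0 (Cmod (a - b)%C) (Cmod_ge_0 _)) as [h|h]; auto.
    specialize (H _ h). lra. }
  apply Cmod_eq_0 in H0. replace a with ((a - b) + b)%C by ring. rewrite H0. ring.
Qed.

Lemma cv_unique u a b : cv u a -> cv u b -> a = b.
Proof.
  intros Ha Hb. apply Cmod_zero_eq. intros e he.
  destruct (Ha (e/2)) as [N1 H1]; [lra|]. destruct (Hb (e/2)) as [N2 H2]; [lra|].
  specialize (H1 (N1+N2)%nat ltac:(lia)). specialize (H2 (N1+N2)%nat ltac:(lia)).
  pose proof (Cmod_tri3 a (u (N1+N2)%nat) b). rewrite (Cmod_sub_sym a (u (N1+N2)%nat)) in H. lra.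
Qed.

Lemma Clim_eq u l : cv u l -> Clim u = l.
Proof.
  intro H. unfold Clim.
  assert (H0 : C_cv u (epsilon (inhabits Cz0) (fun l => C_cv u l))).
  { apply epsilon_spec. exists l. exact H. }
  apply (cv_unique u); [exact H0 | exact H].
Qed.

Lemma Clim_cv u l : cv u l -> cv u (Clim u).
Proof. intro H. rewrite (Clim_eq u l H). exact H. Qed.

Lemma cv_ext u v l : (forall n, u n = v n) -> cv u l -> cv v l.
Proof. intros E H e he. destruct (H e he) as [N HN]. exists N. intros n hn. rewrite <- E. auto. Qed.

Lemma cv_ext_ev u v l M : (forall n, (n >= M)%nat -> u n = v n) -> cv u l -> cv v l.
Proof. intros E H e he. destruct (H e he) as [N HN]. exists (N+M)%nat. intros n hn.
  rewrite <- E by lia. apply HN; lia. Qed.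

Lemma cv_const c : cv (fun _ => c) c.
Proof. intros e he. exists O. intros. replace (c - c)%C with (RtoC 0) by ring.
  rewrite Cmod_0. lra. Qed.

Lemma cv_plus u v a b : cv u a -> cv v b -> cv (fun n => u n + v n)%C (a + b)%C.
Proof.
  intros Hu Hv e he. destruct (Hu (e/2)) as [N1 H1]; [lra|]. destruct (Hv (e/2)) as [N2 H2]; [lra|].
  exists (N1+N2)%nat. intros n hn.
  replace (u n + v n - (a + b))%C with ((u n - a) + (v n - b))%C by ring.
  eapply Rle_lt_trans; [apply Cmod_triangle|]. specialize (H1 n ltac:(lia)). specialize (H2 n ltac:(lia)). lra.
Qed.

Lemma cv_opp u a : cv u a -> cv (fun n => - u n)%C (- a)%C.
Proof. intros Hu e he. destruct (Hu e he) as [N H]. exists N. intros n hn.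
  replace (- u n - - a)%C with (- (u n - a))%C by ring. rewrite Cmod_opp. auto. Qed.

Lemma cv_minus u v a b : cv u a -> cv v b -> cv (fun n => u n - v n)%C (a - b)%C.
Proof. intros. apply cv_plus; auto. apply cv_opp; auto. Qed.

Lemma cv_bounded u a : cv u a -> exists M, M > 0 /\ forall n, Cmod (u n) <= M.
Proof.
  intro H. destruct (H 1 ltac:(lra)) as [N HN].
  assert (exists M, M > 0 /\ forall n, (n < N)%nat -> Cmod (u n) <= M) as [M [HM1 HM2]].
  { clear HN. induction N.
    - exists 1. split; [lra|]. intros; lia.
    - destruct IHN as [M [h1 h2]]. exists (M + Cmod (u N)). split.
      + pose proof (Cmod_ge_0 (u N)). lra.
      + intros n hn. destruct (Nat.eq_dec n N).
        * subst. lra.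
        * pose proof (h2 n ltac:(lia)). pose proof (Cmod_ge_0 (u N)). lra. }
  exists (M + Cmod a + 1). split. { pose proof (Cmod_ge_0 a). lra. }
  intro n. destruct (Nat.lt_ge_cases n N).
  - pose proof (HM2 n H0). pose proof (Cmod_ge_0 a). lra.
  - specialize (HN n H0). pose proof (Cmod_tri3 (u n) a 0). replace (u n - 0)%C with (u n) in H1 by ring.
    replace (a - 0)%C with a in H1 by ring. lra.
Qed.

Lemma cv_mult u v a b : cv u a -> cv v b -> cv (fun n => u n * v n)%C (a * b)%C.
Proof.
  intros Hu Hv. destruct (cv_bounded u a Hu) as [M [HM HMb]].
  intros e he.
  set (K := Cmod b + 1).
  assert (HK : K > 0) by (unfold K; pose proof (Cmod_ge_0 b); lra).
  destruct (Hu (e/(2*K))) as [N1 H1]. { apply Rdiv_lt_0_compat; lra. }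
  destruct (Hv (e/(2*M))) as [N2 H2]. { apply Rdiv_lt_0_compat; lra. }
  exists (N1+N2)%nat. intros n hn.
  replace (u n * v n - a * b)%C with (u n * (v n - b) + (u n - a) * b)%C by ring.
  eapply Rle_lt_trans; [apply Cmod_triangle|]. rewrite !Cmod_mult.
  specialize (H1 n ltac:(lia)). specialize (H2 n ltac:(lia)).
  pose proof (HMb n). pose proof (Cmod_ge_0 (v n - b)%C). pose proof (Cmod_ge_0 (u n - a)%C).
  pose proof (Cmod_ge_0 b). pose proof (Cmod_ge_0 (u n)).
  assert (A1 : Cmod (u n) * Cmod (v n - b)%C < e/2).
  { apply Rle_lt_trans with (M * Cmod (v n - b)%C). apply Rmult_le_compat_r; lra.
    apply Rlt_le_trans with (M * (e/(2*M))). apply Rmult_lt_compat_l; lra. right; field; lra. }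
  assert (A2 : Cmod (u n - a)%C * Cmod b <= e/2).
  { apply Rle_trans with ((e/(2*K)) * K). apply Rmult_le_compat; unfold K in *; lra. right; field; lra. }
  lra.
Qed.

Lemma cv_scal c u a : cv u a -> cv (fun n => c * u n)%C (c * a)%C.
Proof. intro H. apply cv_mult; auto. apply cv_const. Qed.

Lemma cv_inv u a : cv u a -> a <> RtoC 0 -> cv (fun n => / u n)%C (/ a)%C.
Proof.
  intros Hu Ha e he.
  assert (Hm : Cmod a > 0) by (apply Cmod_gt_0; auto).
  destruct (Hu (Cmod a / 2)) as [N1 H1]; [lra|].
  destruct (Hu (e * (Cmod a * Cmod a) / 2)) as [N2 H2].
  { apply Rmult_lt_0_compat; [|lra]. apply Rmult_lt_0_compat; nra. }
  exists (N1+N2)%nat. intros n hn. specialize (H1 n ltac:(lia)). specialize (H2 n ltac:(lia)).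
  assert (Cmod (u n) >= Cmod a / 2).
  { pose proof (Cmod_tri3 a (u n) 0). rewrite (Cmod_sub_sym a (u n)) in H. replace (a - 0)%C with a in H by ring.
    replace (u n - 0)%C with (u n) in H by ring. lra. }
  assert (u n <> RtoC 0). { intro h. rewrite h in H. rewrite Cmod_0 in H. lra. }
  replace (/ u n - / a)%C with (- (u n - a) / (u n * a))%C by (field; auto).
  rewrite Cmod_div by (apply Cmult_neq_0; auto). rewrite Cmod_opp, Cmod_mult.
  apply Rlt_le_trans with ((e * (Cmod a * Cmod a) / 2) / (Cmod a / 2 * Cmod a)).
  - unfold Rdiv. apply Rle_lt_trans with (Cmod (u n - a)%C * / (Cmod a / 2 * Cmod a)).
    + apply Rmult_le_compat_l; [apply Cmod_ge_0|]. apply Rinv_le_contravar.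
      apply Rmult_lt_0_compat; lra. apply Rmult_le_compat_r; lra.
    + apply Rmult_lt_compat_r; [|exact H2]. apply Rinv_0_lt_compat. apply Rmult_lt_0_compat; lra.
  - right. field. lra.
Qed.

Lemma cv_div u v a b : cv u a -> cv v b -> b <> RtoC 0 -> cv (fun n => u n / v n)%C (a / b)%C.
Proof. intros. apply cv_mult; auto. apply cv_inv; auto. Qed.

Lemma cv_sub u a (h : nat -> nat) : (forall n, (h n >= n)%nat) -> cv u a -> cv (fun n => u (h n)) a.
Proof. intros Hh H e he. destruct (H e he) as [N HN]. exists N. intros n hn. apply HN. specialize (Hh n). lia. Qed.

Lemma cv_shift u a k : cv u a -> cv (fun n => u (n + k)%nat) a.
Proof. intro H. apply (cv_sub u a (fun n => (n+k)%nat)); auto. intros; lia. Qed.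

Lemma cv_shift_inv u a k : cv (fun n => u (n + k)%nat) a -> cv u a.
Proof. intros H e he. destruct (H e he) as [N HN]. exists (N+k)%nat. intros n hn.
  replace n with ((n - k) + k)%nat by lia. apply HN. lia. Qed.

Lemma cv_le_bound u a c B M : cv u a -> (forall n, (n >= M)%nat -> Cmod (u n - c)%C <= B) -> Cmod (a - c)%C <= B.
Proof.
  intros H HB. apply Rnot_lt_le. intro hc.
  destruct (H (Cmod (a - c)%C - B)) as [N HN]; [lra|].
  specialize (HN (N+M)%nat ltac:(lia)). specialize (HB (N+M)%nat ltac:(lia)).
  pose proof (Cmod_tri3 a (u (N+M)%nat) c). rewrite (Cmod_sub_sym a (u (N+M)%nat)) in H0. lra.
Qed.

Lemma cv_ge_bound u a c : cv u a -> (forall n, Cmod (u n) >= c) -> Cmod a >= c.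
Proof.
  intros H HB. apply Rnot_lt_ge. intro hc.
  destruct (H (c - Cmod a)) as [N HN]; [lra|].
  specialize (HN N ltac:(lia)). specialize (HB N).
  pose proof (Cmod_tri3 (u N) a 0). replace (u N - 0)%C with (u N) in H0 by ring.
  replace (a - 0)%C with a in H0 by ring. lra.
Qed.

Lemma Cmod_le_comp (z : C) : Cmod z <= Rabs (fst z) + Rabs (snd z).
Proof.
  unfold Cmod. rewrite <- (sqrt_Rsqr (Rabs (fst z) + Rabs (snd z))).
  2: { pose proof (Rabs_pos (fst z)). pose proof (Rabs_pos (snd z)). lra. }
  apply sqrt_le_1_alt. unfold Rsqr. rewrite <- (pow2_abs (fst z)), <- (pow2_abs (snd z)).
  pose proof (Rabs_pos (fst z)). pose proof (Rabs_pos (snd z)). nra.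
Qed.

Lemma fst_le_Cmod (z : C) : Rabs (fst z) <= Cmod z.
Proof. pose proof (Rmax_Cmod z). pose proof (Rmax_l (Rabs (fst z)) (Rabs (snd z))). lra. Qed.
Lemma snd_le_Cmod (z : C) : Rabs (snd z) <= Cmod z.
Proof. pose proof (Rmax_Cmod z). pose proof (Rmax_r (Rabs (fst z)) (Rabs (snd z))). lra. Qed.

Lemma cv_cauchy u : (forall e, e > 0 -> exists N, forall n m, (n >= N)%nat -> (m >= N)%nat ->
   Cmod (u n - u m)%C < e) -> exists l, cv u l.
Proof.
  intro H.
  assert (H1 : Cauchy_crit (fun n => fst (u n))).
  { intros e he. destruct (H e he) as [N HN]. exists N. intros n m hn hm. unfold Rdist.
    eapply Rle_lt_trans; [|apply (HN n m hn hm)].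
    replace (fst (u n) - fst (u m)) with (fst (u n - u m)%C) by (simpl; ring). apply fst_le_Cmod. }
  assert (H2 : Cauchy_crit (fun n => snd (u n))).
  { intros e he. destruct (H e he) as [N HN]. exists N. intros n m hn hm. unfold Rdist.
    eapply Rle_lt_trans; [|apply (HN n m hn hm)].
    replace (snd (u n) - snd (u m)) with (snd (u n - u m)%C) by (simpl; ring). apply snd_le_Cmod. }
  destruct (Rcomplete.R_complete _ H1) as [l1 L1]. destruct (Rcomplete.R_complete _ H2) as [l2 L2].
  exists (l1, l2). intros e he.
  destruct (L1 (e/2)) as [N1 K1]; [lra|]. destruct (L2 (e/2)) as [N2 K2]; [lra|].
  exists (N1+N2)%nat. intros n hn. specialize (K1 n ltac:(lia)). specialize (K2 n ltac:(lia)).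
  unfold Rdist in *. eapply Rle_lt_trans; [apply Cmod_le_comp|]. simpl.
  replace (fst (u n) + - l1) with (fst (u n) - l1) by ring.
  replace (snd (u n) + - l2) with (snd (u n) - l2) by ring. lra.
Qed.

Lemma geom_sum_le (r : R) (n : nat) : 0 <= r < 1 -> sum_f_R0 (fun i => r ^ i) n <= 1 / (1 - r).
Proof.
  intro hr. rewrite tech3 by lra.
  apply Rmult_le_compat_r. { left. apply Rinv_0_lt_compat. lra. }
  pose proof (pow_le r (S n) ltac:(lra)). lra.
Qed.

Fixpoint psum (f : nat -> C) (n : nat) : C :=
  match n with O => RtoC 0 | S k => (psum f k + f k)%C end.
Definition lim (u : nat -> C) : C := Clim u.
Definition sumC (f : nat -> C) : C := lim (psum f).

Lemma Cpsum_psum f n : Cpsum f n = psum f n.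
Proof. induction n; simpl; [reflexivity| rewrite IHn; reflexivity]. Qed.

Lemma Csum_sumC f : Csum f = sumC f.
Proof. unfold Csum, sumC, lim. f_equal; try (apply FunctionalExtensionality.functional_extensionality;
  intro n; apply Cpsum_psum). Qed.

Lemma lim_eq u l : cv u l -> lim u = l.
Proof. apply Clim_eq. Qed.

Lemma psum_S f n : psum f (S n) = (psum f n + f n)%C.
Proof. reflexivity. Qed.

Lemma psum_ext f g n : (forall i, (i < n)%nat -> f i = g i) -> psum f n = psum g n.
Proof. induction n; intro H; simpl. reflexivity. rewrite IHn by (intros; apply H; lia). rewrite H by lia. reflexivity. Qed.

Lemma psum_first f n : psum f (S n) = (f O + psum (fun i => f (S i)) n)%C.
Proof. induction n. simpl. toC; ring.
  rewrite psum_S, IHn. simpl; toC; ring. Qed.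

Lemma psum_add f g n : psum (fun i => f i + g i)%C n = (psum f n + psum g n)%C.
Proof. induction n; simpl. toC; ring. rewrite IHn. toC; ring. Qed.

Lemma psum_scal c f n : psum (fun i => c * f i)%C n = (c * psum f n)%C.
Proof. induction n; simpl. toC; ring. rewrite IHn. toC; ring. Qed.

Lemma psum_opp f n : psum (fun i => - f i)%C n = (- psum f n)%C.
Proof. induction n; simpl. toC; ring. rewrite IHn. toC; ring. Qed.

Lemma psum_split f m n : psum f (m + n) = (psum f m + psum (fun i => f (m + i)%nat) n)%C.
Proof. induction n. simpl. rewrite Nat.add_0_r. toC; ring.
  rewrite Nat.add_succ_r, !psum_S, IHn. toC; ring. Qed.

Lemma psum_rev f n : psum f n = psum (fun i => f (n - 1 - i)%nat) n.
Proof.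
  induction n as [|n IHn] in f |- *. reflexivity.
  rewrite psum_first, psum_S. rewrite (IHn (fun i => f (S i))).
  replace (S n - 1 - n)%nat with O by lia.
  rewrite (psum_ext (fun i => f (S (n - 1 - i))) (fun i => f (S n - 1 - i)%nat)).
  - toC; ring.
  - intros i hi. f_equal. lia.
Qed.

Lemma psum_zero n : psum (fun _ => RtoC 0) n = RtoC 0.
Proof. induction n; simpl. reflexivity. rewrite IHn. toC; ring. Qed.

Lemma psum_bound f n c r : 0 <= r < 1 -> (forall i, Cmod (f i) <= c * r ^ i) ->
  Cmod (psum f n) <= c / (1 - r).
Proof.
  intros hr H.
  assert (hc : 0 <= c). { specialize (H O). simpl in H. pose proof (Cmod_ge_0 (f O)). lra. }
  assert (forall n, Cmod (psum f n) <= c * sum_f_R0 (fun i => r ^ i) n - c * r ^ n).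
  { induction n0.
    - simpl. change Cz0 with (RtoC 0). rewrite Cmod_0. lra.
    - rewrite psum_S. eapply Rle_trans; [apply Cmod_triangle|]. specialize (H n0).
      simpl sum_f_R0. pose proof (pow_le r (S n0) ltac:(lra)).
      assert (0 <= c * r ^ S n0) by (apply Rmult_le_pos; lra). change (r ^ S n0) with (r * r ^ n0) in *. lra. }
  eapply Rle_trans; [apply H0|]. pose proof (geom_sum_le r n hr).
  assert (0 <= c * r ^ n) by (apply Rmult_le_pos; [lra| apply pow_le; lra]).
  assert (c * sum_f_R0 (fun i => r ^ i) n <= c * (1 / (1 - r))) by (apply Rmult_le_compat_l; lra).
  unfold Rdiv in *. lra.
Qed.

Lemma pow_le_one (x : R) (n : nat) : 0 <= x <= 1 -> x ^ n <= 1.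
Proof. intro h. rewrite <- (pow1 n). apply pow_incr. lra. Qed.

Lemma Cmult_eq_reg_l (c x y : C) : c <> RtoC 0 -> (c * x = c * y)%C -> x = y.
Proof. intros hc h. replace x with (/ c * (c * x))%C by (field; auto). rewrite h. field. auto. Qed.


Lemma psum_tele u k : psum (fun i => u (S i) - u i)%C k = (u k - u O)%C.
Proof. induction k; simpl. ring. rewrite IHk. ring. Qed.

Lemma pow_small r e : 0 <= r < 1 -> e > 0 -> exists N, forall n, (n >= N)%nat -> r ^ n < e.
Proof.
  intros hr he. destruct (pow_lt_1_zero r ltac:(rewrite Rabs_right; lra) e he) as [N HN].
  exists N. intros n hn. specialize (HN n hn). rewrite Rabs_right in HN; auto.
  apply Rle_ge, pow_le; lra.
Qed.

Lemma cv_geom_diff u K r : 0 <= r < 1 -> (forall n, Cmod (u (S n) - u n)%C <= K * r ^ n) ->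
  exists l, cv u l /\ forall n, Cmod (l - u n)%C <= K * r ^ n / (1 - r).
Proof.
  intros hr H.
  assert (HB : forall n k, Cmod (u (n + k)%nat - u n)%C <= K * r ^ n / (1 - r)).
  { intros n k.
    replace (u (n + k)%nat - u n)%C with (psum (fun i => u (S (n + i)) - u (n + i)%nat)%C k).
    2: { transitivity (psum (fun i => u (n + S i)%nat - u (n + i)%nat)%C k).
         - apply psum_ext; intros; replace (S (n + i)) with (n + S i)%nat by lia; reflexivity.
         - rewrite (psum_tele (fun i => u (n + i)%nat)). rewrite Nat.add_0_r. reflexivity. }
    apply psum_bound; auto. intro i. replace (S (n + i)) with (S (n+i)) by lia.
    eapply Rle_trans; [apply H|]. rewrite pow_add. right; ring. }
  assert (HK : 0 <= K). { specialize (H O). simpl in H. pose proof (Cmod_ge_0 (u 1%nat - u O)%C). lra. }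
  destruct (cv_cauchy u) as [l Hl].
  { intros e he.
    destruct (pow_small r (e / 2 * (1 - r) / (K + 1)) hr) as [N HN].
    { apply Rdiv_lt_0_compat; [|lra]. apply Rmult_lt_0_compat; lra. }
    exists N. intros n m hn hm.
    assert (forall p, (p >= N)%nat -> Cmod (u p - u N)%C < e / 2).
    { intros p hp. replace p with (N + (p - N))%nat by lia.
      eapply Rle_lt_trans; [apply HB|]. specialize (HN N ltac:(lia)).
      apply Rmult_lt_reg_r with (1 - r); [lra|]. unfold Rdiv. rewrite Rmult_assoc, Rinv_l by lra.
      rewrite Rmult_1_r.
      apply Rle_lt_trans with ((K + 1) * r ^ N). { apply Rmult_le_compat_r. apply pow_le; lra. lra. }
      apply Rmult_lt_reg_l with (/ (K + 1)). { apply Rinv_0_lt_compat; lra. }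
      rewrite <- Rmult_assoc, Rinv_l by lra. rewrite Rmult_1_l.
      eapply Rlt_le_trans; [apply HN|]. right. field. lra. }
    pose proof (H0 n hn). pose proof (H0 m hm).
    pose proof (Cmod_tri3 (u n) (u N) (u m)). rewrite (Cmod_sub_sym (u N) (u m)) in H3. lra. }
  exists l. split; auto. intro n.
  apply (cv_le_bound u l (u n) _ n Hl). intros m hm. replace m with (n + (m - n))%nat by lia. apply HB.
Qed.

Lemma sum_geom f K r : 0 <= r < 1 -> (forall i, Cmod (f i) <= K * r ^ i) ->
  cv (psum f) (sumC f) /\ forall n, Cmod (sumC f - psum f n)%C <= K * r ^ n / (1 - r).
Proof.
  intros hr H. destruct (cv_geom_diff (psum f) K r hr) as [l [Hl Ht]].
  { intro n. rewrite psum_S. replace (psum f n + f n - psum f n)%C with (f n) by ring. apply H. }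
  unfold sumC. rewrite (lim_eq _ l Hl). auto.
Qed.

Lemma cv_psum_fin (a : nat -> nat -> C) (b : nat -> C) J :
  (forall j, cv (fun N => a N j) (b j)) -> cv (fun N => psum (a N) J) (psum b J).
Proof.
  intro H. induction J; simpl. apply cv_const. apply cv_plus; auto.
Qed.

Lemma tannery (a : nat -> nat -> C) (b : nat -> C) K r : 0 <= r < 1 ->
  (forall N j, Cmod (a N j) <= K * r ^ j) -> (forall j, cv (fun N => a N j) (b j)) ->
  cv (fun N => psum (a N) N) (sumC b).
Proof.
  intros hr HA HC.
  assert (HBb : forall j, Cmod (b j) <= K * r ^ j).
  { intro j. replace (b j) with (b j - 0)%C by ring. apply (cv_le_bound _ _ _ _ O (HC j)).
    intros. replace (a n j - 0)%C with (a n j) by ring. auto. }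
  destruct (sum_geom b K r hr HBb) as [Hb _].
  assert (HK : 0 <= K). { specialize (HA O O). simpl in HA. pose proof (Cmod_ge_0 (a O O)). lra. }
  intros e he.
  destruct (pow_small r (e / 4 * (1 - r) / (K + 1)) hr) as [J HJ].
  { apply Rdiv_lt_0_compat; [|lra]. apply Rmult_lt_0_compat; lra. }
  specialize (HJ J ltac:(lia)).
  assert (Htail : K * r ^ J / (1 - r) < e / 4).
  { apply Rmult_lt_reg_r with (1 - r); [lra|]. unfold Rdiv. rewrite Rmult_assoc, Rinv_l by lra.
    rewrite Rmult_1_r.
    apply Rle_lt_trans with ((K + 1) * r ^ J). { apply Rmult_le_compat_r. apply pow_le; lra. lra. }
    apply Rmult_lt_reg_l with (/ (K + 1)). { apply Rinv_0_lt_compat; lra. }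
    rewrite <- Rmult_assoc, Rinv_l by lra. rewrite Rmult_1_l.
    eapply Rlt_le_trans; [apply HJ|]. right. field. lra. }
  destruct (cv_psum_fin a b J HC (e/4)) as [N1 H1]; [lra|].
  destruct (Hb (e/4)) as [N2 H2]; [lra|].
  exists (N1 + N2 + J)%nat. intros N hN.
  specialize (H1 N ltac:(lia)). specialize (H2 N ltac:(lia)).
  replace N with (J + (N - J))%nat in * by lia.
  rewrite psum_split in *.
  set (ta := psum (fun i => a (J + (N - J))%nat (J + i)%nat) (N - J)).
  set (tb := psum (fun i => b (J + i)%nat) (N - J)).
  assert (Ha : Cmod ta <= K * r ^ J / (1 - r)).
  { apply psum_bound; auto. intro i. eapply Rle_trans; [apply HA|]. rewrite pow_add. right; ring. }
  assert (Hbt : Cmod tb <= K * r ^ J / (1 - r)).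
  { apply psum_bound; auto. intro i. eapply Rle_trans; [apply HBb|]. rewrite pow_add. right; ring. }
  set (pa := psum (a (J + (N - J))%nat) J) in *. set (pb := psum b J) in *.
  replace (pa + ta - sumC b)%C with ((pa - pb) + ta - tb + (pb + tb - sumC b))%C by ring.
  eapply Rle_lt_trans; [apply Cmod_triangle|].
  eapply Rle_lt_trans; [apply Rplus_le_compat_r; apply Cmod_triangle|].
  eapply Rle_lt_trans; [apply Rplus_le_compat_r; apply Rplus_le_compat_r; apply Cmod_triangle|].
  rewrite Cmod_opp. unfold ta, tb in *. lra.
Qed.


Fixpoint qp (a p : C) (n : nat) : C :=
  match n with O => RtoC 1 | S k => (qp a p k * (1 - a * p ^ k))%C end.
Definition qpinf (a p : C) : C := lim (qp a p).

Lemma qpoch_qp a p n : qpoch a p n = qp a p n.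
Proof. induction n; simpl. reflexivity. rewrite IHn, DCpow_eq. reflexivity. Qed.

Lemma qpoch_inf_qpinf a p : qpoch_inf a p = qpinf a p.
Proof. unfold qpoch_inf, qpinf, lim. f_equal; try (apply functional_extensionality; intro; apply qpoch_qp). Qed.

Lemma qp_S a p n : qp a p (S n) = (qp a p n * (1 - a * p ^ n))%C.
Proof. reflexivity. Qed.

Lemma qp_shift a p n : qp a p (S n) = ((1 - a) * qp (a * p) p n)%C.
Proof.
  induction n. simpl. ring.
  rewrite qp_S, IHn, qp_S. rewrite Cpow_S. ring.
Qed.

Lemma qp_add a p m n : qp a p (m + n) = (qp a p m * qp (a * p ^ m) p n)%C.
Proof.
  induction n. rewrite Nat.add_0_r. simpl. ring.
  rewrite Nat.add_succ_r, !qp_S, IHn, Cpow_add_r. ring.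
Qed.

Lemma qp_double a p n : qp a p (n + n) = (qp a (p * p) n * qp (a * p) (p * p) n)%C.
Proof.
  induction n. simpl. ring.
  replace (S n + S n)%nat with (S (S (n + n))) by lia.
  rewrite !qp_S, IHn. rewrite Cpow_mult_l, Cpow_S, Cpow_add_r. ring.
Qed.

Lemma qp_pm a p n : (qp a p n * qp (- a) p n)%C = qp (a * a) (p * p) n.
Proof.
  induction n. simpl. ring.
  rewrite !qp_S, <- IHn, Cpow_mult_l. ring.
Qed.

Lemma Cmod_1_minus (z : C) : Cmod (1 - z)%C <= 1 + Cmod z.
Proof. eapply Rle_trans; [apply Cmod_triangle|]. rewrite Cmod_opp, Cmod_1. lra. Qed.

Lemma Cmod_1_minus_ge (z : C) : Cmod (1 - z)%C >= 1 - Cmod z.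
Proof. pose proof (Cmod_tri3 1 (1 - z)%C 0). replace (1 - 0)%C with (RtoC 1) in H by ring.
  replace (1 - z - 0)%C with (1 - z)%C in H by ring. replace (1 - (1 - z))%C with z in H by ring.
  rewrite Cmod_1 in H. lra. Qed.

Lemma exp_le x y : x <= y -> exp x <= exp y.
Proof. intro h. destruct (Rle_lt_or_eq_dec _ _ h). left; apply exp_increasing; auto. subst; lra. Qed.

Lemma qp_bound a p : Cmod p < 1 -> forall n, Cmod (qp a p n) <= exp (Cmod a / (1 - Cmod p)).
Proof.
  intros hp n. set (r := Cmod p) in *. pose proof (Cmod_ge_0 p) as hr. fold r in hr.
  assert (forall n, Cmod (qp a p n) <= exp (Cmod a * (1 - r ^ n) / (1 - r))).
  { induction n0.
    - simpl. rewrite Cmod_1. replace (Cmod a * (1 - 1) / (1 - r)) with 0 by (field; lra). rewrite exp_0. lra.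
    - rewrite qp_S, Cmod_mult. eapply Rle_trans.
      { apply Rmult_le_compat; [apply Cmod_ge_0|apply Cmod_ge_0|apply IHn0|apply Cmod_1_minus]. }
      rewrite Cmod_mult, Cmod_pow. fold r.
      eapply Rle_trans. { apply Rmult_le_compat_l. apply Rlt_le, exp_pos. apply exp_ineq1_le. }
      rewrite <- exp_plus. right. f_equal. simpl. field. lra. }
  eapply Rle_trans; [apply H|]. apply exp_le.
  unfold Rdiv. apply Rmult_le_compat_r. left; apply Rinv_0_lt_compat; lra.
  pose proof (Cmod_ge_0 a). pose proof (pow_le r n hr). nra.
Qed.

Lemma qp_cv a p : Cmod p < 1 -> cv (qp a p) (qpinf a p) /\ forall n, Cmod (qpinf a p - qp a p n)%C <= exp (Cmod a / (1 - Cmod p)) * Cmod a * Cmod p ^ n / (1 - Cmod p).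
Proof.
  intro hp. pose proof (Cmod_ge_0 p).
  destruct (cv_geom_diff (qp a p) (exp (Cmod a / (1 - Cmod p)) * Cmod a) (Cmod p)) as [l [Hl Ht]].
  { lra. }
  { intro n. rewrite qp_S. replace (qp a p n * (1 - a * p ^ n) - qp a p n)%C with (- (qp a p n * a * p ^ n))%C by ring.
    rewrite Cmod_opp, !Cmod_mult, Cmod_pow. apply Rmult_le_compat_r. apply pow_le; auto.
    apply Rmult_le_compat_r. apply Cmod_ge_0. apply qp_bound; auto. }
  unfold qpinf. rewrite (lim_eq _ _ Hl). auto.
Qed.

Lemma qpinf_shift a p : Cmod p < 1 -> qpinf a p = ((1 - a) * qpinf (a * p) p)%C.
Proof.
  intro hp. destruct (qp_cv a p hp) as [H1 _]. destruct (qp_cv (a * p) p hp) as [H2 _].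
  apply (cv_unique (fun n => qp a p (S n))).
  - apply (cv_sub _ _ S); auto.
  - apply (cv_ext (fun n => (1 - a) * qp (a * p) p n)%C). intro n. rewrite qp_shift. reflexivity.
    apply cv_scal. auto.
Qed.

Lemma qp_near1 a p : Cmod p < 1 -> Cmod a / (1 - Cmod p) <= 1/2 ->
  forall n, Cmod (qp a p n - 1)%C <= 2 * Cmod a / (1 - Cmod p).
Proof.
  intros hp ha n. set (r := Cmod p) in *. pose proof (Cmod_ge_0 p) as hr. fold r in hr.
  pose proof (Cmod_ge_0 a) as hA.
  assert (forall n, Cmod (qp a p n - 1)%C <= 2 * Cmod a * (1 - r ^ n) / (1 - r)).
  { induction n0.
    - simpl. replace (1 - 1)%C with (RtoC 0) by ring. rewrite Cmod_0. right. field. lra.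
    - rewrite qp_S. replace (qp a p n0 * (1 - a * p ^ n0) - 1)%C with
        ((qp a p n0 - 1) * (1 - a * p ^ n0) - a * p ^ n0)%C by ring.
      eapply Rle_trans; [apply Cmod_triangle|]. rewrite Cmod_opp, !Cmod_mult, Cmod_pow. fold r.
      pose proof (pow_le r n0 hr).
      assert (HX : 2 * Cmod a * (1 - r ^ n0) / (1 - r) <= 1).
      { replace (2 * Cmod a * (1 - r ^ n0) / (1 - r)) with (2 * (Cmod a / (1 - r)) * (1 - r ^ n0)) by (field; lra).
        assert (0 <= Cmod a / (1-r)) by (apply Rdiv_le_0_compat; lra).
        assert (r^n0 <= 1) by (apply pow_le_one; lra). nra. }
      assert (Cmod (qp a p n0 - 1)%C * Cmod (1 - a * p ^ n0)%C <=
              2 * Cmod a * (1 - r ^ n0) / (1 - r) * (1 + Cmod a * r ^ n0)).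
      { apply Rmult_le_compat; try apply Cmod_ge_0; auto.
        eapply Rle_trans; [apply Cmod_1_minus|]. rewrite Cmod_mult, Cmod_pow. fold r. lra. }
      eapply Rle_trans. apply Rplus_le_compat_r. apply H0.
      replace (2 * Cmod a * (1 - r ^ S n0) / (1 - r)) with (2 * Cmod a * (1 - r ^ n0) / (1 - r) + 2 * Cmod a * r ^ n0)
        by (simpl; field; lra).
      assert (0 <= Cmod a * r ^ n0) by (apply Rmult_le_pos; auto).
      assert (2 * Cmod a * (1 - r ^ n0) / (1 - r) * (Cmod a * r ^ n0) <= Cmod a * r ^ n0).
      { rewrite <- (Rmult_1_l (Cmod a * r ^ n0)) at 2. apply Rmult_le_compat_r; auto. }
      nra. }
  eapply Rle_trans; [apply H|]. unfold Rdiv. apply Rmult_le_compat_r. left; apply Rinv_0_lt_compat; lra.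
  pose proof (pow_le r n hr). nra.
Qed.

Lemma qpinf_near1 a p : Cmod p < 1 -> Cmod a / (1 - Cmod p) <= 1/2 ->
  Cmod (qpinf a p - 1)%C <= 2 * Cmod a / (1 - Cmod p).
Proof.
  intros hp ha. destruct (qp_cv a p hp) as [H _]. apply (cv_le_bound _ _ _ _ O H). intros; apply qp_near1; auto.
Qed.

Lemma qp_lower b p : Cmod p < 1 -> Cmod b <= 1 ->
  forall n, Cmod (qp b p n) >= 1 - Cmod b * (1 - Cmod p ^ n) / (1 - Cmod p).
Proof.
  intros hp hb n. set (r := Cmod p) in *. pose proof (Cmod_ge_0 p) as hr. fold r in hr.
  pose proof (Cmod_ge_0 b) as hB.
  induction n.
  - simpl. rewrite Cmod_1. replace (Cmod b * (1 - 1) / (1 - r)) with 0 by (field; lra). lra.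
  - rewrite qp_S, Cmod_mult.
    pose proof (Cmod_1_minus_ge (b * p ^ n)%C). rewrite Cmod_mult, Cmod_pow in H. fold r in H.
    pose proof (pow_le r n hr). pose proof (pow_le r (S n) hr).
    assert (hrn : r ^ n <= 1) by (apply pow_le_one; lra).
    assert (Hx : Cmod b * r ^ n <= 1) by nra.
    replace (1 - Cmod b * (1 - r ^ S n) / (1 - r)) with ((1 - Cmod b * (1 - r ^ n) / (1 - r)) - Cmod b * r ^ n)
      by (simpl; field; lra).
    set (L := 1 - Cmod b * (1 - r ^ n) / (1 - r)) in *.
    assert (L <= 1). { unfold L. assert (0 <= Cmod b * (1 - r ^ n) / (1 - r)).
      { apply Rdiv_le_0_compat; [|lra]. apply Rmult_le_pos; lra. } lra. }
    pose proof (Cmod_ge_0 (qp b p n)). pose proof (Cmod_ge_0 (1 - b * p ^ n)%C).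
    destruct (Rle_lt_dec 0 L).
    + assert (Cmod (qp b p n) * Cmod (1 - b * p ^ n)%C >= L * (1 - Cmod b * r ^ n)).
      { apply Rle_ge, Rmult_le_compat; lra. }
      assert (0 <= Cmod b * r ^ n) by (apply Rmult_le_pos; lra).
      assert (L * (Cmod b * r ^ n) <= Cmod b * r ^ n) by nra. lra.
    + assert (0 <= Cmod b * r ^ n) by (apply Rmult_le_pos; lra).
      assert (0 <= Cmod (qp b p n) * Cmod (1 - b * p ^ n)%C) by (apply Rmult_le_pos; lra). lra.
Qed.

Lemma qp_lower_weak p : Cmod p < 1 -> forall n, Cmod (qp p p n) >= (1 - Cmod p) ^ n.
Proof.
  intros hp n. pose proof (Cmod_ge_0 p). induction n.
  - simpl. rewrite Cmod_1. lra.
  - rewrite qp_S, Cmod_mult. simpl pow.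
    pose proof (Cmod_1_minus_ge (p * p ^ n)%C). rewrite Cmod_mult, Cmod_pow in H0.
    assert (Cmod p * Cmod p ^ n <= Cmod p). { assert (Cmod p ^ n <= 1) by (apply pow_le_one; lra). nra. }
    pose proof (pow_le (1 - Cmod p) n ltac:(lra)).
    rewrite Rmult_comm. apply Rle_ge. apply Rmult_le_compat; lra.
Qed.

Lemma qp_lower_pos p : Cmod p < 1 -> exists c, c > 0 /\ forall n, Cmod (qp p p n) >= c.
Proof.
  intro hp. pose proof (Cmod_ge_0 p) as hr. set (r := Cmod p) in *.
  destruct (pow_small r ((1 - r) / 2) ltac:(lra) ltac:(lra)) as [I HI]. specialize (HI I ltac:(lia)).
  assert (hI : 0 < (1 - r) ^ I) by (apply pow_lt; lra).
  exists ((1 - r) ^ I / 2). split; [lra|]. intro n.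
  destruct (Nat.lt_ge_cases n I).
  - eapply Rge_trans; [apply qp_lower_weak; auto|]. fold r.
    apply Rle_ge. apply Rle_trans with ((1 - r) ^ I); [lra|].
    replace I with (n + (I - n))%nat by lia. rewrite pow_add.
    rewrite <- (Rmult_1_r ((1 - r) ^ n)) at 2. apply Rmult_le_compat_l. apply pow_le; lra.
    apply pow_le_one; lra.
  - replace n with (I + (n - I))%nat by lia. rewrite qp_add, Cmod_mult.
    pose proof (qp_lower_weak p hp I). fold r in H0.
    assert (hb : Cmod (p * p ^ I)%C <= 1).
    { rewrite Cmod_mult, Cmod_pow. fold r. assert (r ^ I <= 1) by (apply pow_le_one; lra). nra. }
    pose proof (qp_lower (p * p ^ I)%C p hp hb (n - I)). fold r in H1.
    rewrite Cmod_mult, Cmod_pow in H1. fold r in H1.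
    assert (1 - r * r ^ I * (1 - r ^ (n - I)) / (1 - r) >= 1/2).
    { assert (r * r ^ I * (1 - r ^ (n - I)) / (1 - r) <= 1/2); [|lra].
      pose proof (pow_le r (n - I) hr). pose proof (pow_le r I hr).
      apply Rle_trans with (r ^ I / (1 - r)).
      - unfold Rdiv. apply Rmult_le_compat_r. left; apply Rinv_0_lt_compat; lra.
        assert (r ^ (n - I) <= 1) by (apply pow_le_one; lra).
        assert (r * (1 - r ^ (n - I)) <= 1) by nra. nra.
      - apply Rmult_le_reg_r with (1 - r); [lra|]. unfold Rdiv. rewrite Rmult_assoc, Rinv_l by lra. lra. }
    apply Rle_ge. apply Rle_trans with ((1 - r) ^ I * (1/2)); [lra|].
    apply Rmult_le_compat; lra.
Qed.

Lemma qp_nz p n : Cmod p < 1 -> qp p p n <> RtoC 0.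
Proof.
  intros hp h. destruct (qp_lower_pos p hp) as [c [hc H]]. specialize (H n). rewrite h, Cmod_0 in H. lra.
Qed.

Lemma qpinf_nz p : Cmod p < 1 -> qpinf p p <> RtoC 0.
Proof.
  intros hp h. destruct (qp_lower_pos p hp) as [c [hc H]]. destruct (qp_cv p p hp) as [Hc _].
  pose proof (cv_ge_bound _ _ _ Hc H). rewrite h, Cmod_0 in H0. lra.
Qed.


Fixpoint tri (n : nat) : nat := match n with O => O | S k => (tri k + k)%nat end.

Definition Gb (p : C) (n k : nat) : C :=
  if (k <=? n)%nat then (qp p p n / (qp p p k * qp p p (n - k)))%C else RtoC 0.

Ltac qpfield hp := field; repeat match goal with |- _ /\ _ => split end;
  try (apply qp_nz; exact hp); auto.

Lemma Gb_0 p n : Cmod p < 1 -> Gb p n 0 = RtoC 1.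
Proof. intro hp. unfold Gb. simpl. rewrite Nat.sub_0_r. qpfield hp. Qed.

Lemma Gb_nn p n : Cmod p < 1 -> Gb p n n = RtoC 1.
Proof. intro hp. unfold Gb. rewrite Nat.leb_refl, Nat.sub_diag. simpl. qpfield hp. Qed.

Lemma Gb_out p n k : (n < k)%nat -> Gb p n k = RtoC 0.
Proof. intro h. unfold Gb. destruct (Nat.leb_spec k n); [lia|reflexivity]. Qed.

Lemma Gb_sym p n k : (k <= n)%nat -> Gb p n (n - k) = Gb p n k.
Proof. intro h. unfold Gb. destruct (Nat.leb_spec (n - k) n); [|lia]. destruct (Nat.leb_spec k n); [|lia].
  replace (n - (n - k))%nat with k by lia. f_equal. ring. Qed.

Lemma Gb_pascal p n k : Cmod p < 1 -> (k <= n)%nat ->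
  Gb p (S n) (S k) = (Gb p n k + p ^ (S k) * Gb p n (S k))%C.
Proof.
  intros hp hk. destruct (Nat.eq_dec k n) as [e|ne].
  - subst. rewrite Gb_nn, Gb_nn, Gb_out by (auto; lia). ring.
  - unfold Gb. destruct (Nat.leb_spec (S k) (S n)); [|lia]. destruct (Nat.leb_spec k n); [|lia].
    destruct (Nat.leb_spec (S k) n); [|lia].
    set (d := (n - S k)%nat).
    replace (S n - S k)%nat with (S d) by (unfold d; lia).
    replace (n - k)%nat with (S d) by (unfold d; lia).
    replace (S n) with (S (k + S d)) by (unfold d; lia).
    replace n with (k + S d)%nat by (unfold d; lia).
    rewrite !qp_S. rewrite !Cpow_add_r, !Cpow_S.
    pose proof (qp_nz p k hp). pose proof (qp_nz p d hp). pose proof (qp_nz p (k + S d) hp).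
    pose proof (qp_nz p (S k) hp) as h1. pose proof (qp_nz p (S d) hp) as h2.
    rewrite qp_S in h1, h2.
    assert (1 - p * p ^ k <> RtoC 0)%C. { intro h. apply h1. rewrite h. ring. }
    assert (1 - p * p ^ d <> RtoC 0)%C. { intro h. apply h2. rewrite h. ring. }
    field. repeat split; auto.
Qed.

Lemma rothe p : Cmod p < 1 -> forall n x,
  qp (- x) p n = psum (fun k => Gb p n k * p ^ (tri k) * x ^ k)%C (S n).
Proof.
  intro hp. induction n; intro x.
  - simpl. rewrite Gb_0 by auto. simpl. ring.
  - rewrite qp_shift. replace (- x * p)%C with (- (x * p))%C by ring. rewrite (IHn (x * p)%C).
    set (A := fun k => (Gb p n k * p ^ tri k * (x * p) ^ k)%C).
    assert (E1 : psum A (S n) = (1 + psum (fun k => A (S k)) n)%C).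
    { rewrite psum_first. unfold A at 1. cbv beta. rewrite Gb_0 by auto. simpl. ring. }
    assert (E2 : psum (fun k => A (S k)) (S n) = psum (fun k => A (S k)) n).
    { rewrite psum_S. unfold A at 2. cbv beta. rewrite Gb_out by lia. ring. }
    rewrite (psum_first (fun k => (Gb p (S n) k * p ^ tri k * x ^ k)%C) (S n)). cbv beta. rewrite Gb_0 by auto.
    rewrite (psum_ext (fun i => Gb p (S n) (S i) * p ^ tri (S i) * x ^ S i)%C (fun k => x * A k + A (S k))%C).
    2: { intros i hi. cbv beta. rewrite Gb_pascal by (auto; lia). unfold A. simpl tri.
         rewrite !Cpow_add_r, !Cpow_mult_l, !Cpow_S. ring. }
    rewrite psum_add, psum_scal, E2, E1. simpl. ring.
Qed.


Lemma tri_add a b : tri (a + b) = (tri a + tri b + a * b)%nat.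
Proof. induction b. rewrite Nat.add_0_r, Nat.mul_0_r. simpl. lia. rewrite Nat.add_succ_r. simpl. rewrite IHb. nia. Qed.

Lemma tri_sq k : (2 * tri k + k = k * k)%nat.
Proof. induction k. reflexivity. simpl tri. nia. Qed.

Lemma E1 N j : (tri (S N + j) + tri (S N) = N * (S N + j) + tri (S j))%nat.
Proof. rewrite tri_add. pose proof (tri_sq (S N)). simpl tri in *. nia. Qed.

Lemma E2 N i : (i <= N)%nat -> (tri (N - i) + tri (S N) = N * (N - i) + tri (S i))%nat.
Proof.
  intro h. set (k := (N - i)%nat). replace N with (k + i)%nat by (unfold k; lia).
  replace (S (k + i)) with (k + S i)%nat by lia. rewrite tri_add. pose proof (tri_sq k). simpl tri. nia.
Qed.

Lemma E3 N j : (4 * tri (N + j) + 2 * (N + j) + 4 * tri (S N) = 4 * N * (N + j) + (2 * (j * j) + 2 * N))%nat.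
Proof. pose proof (tri_sq (N + j)). pose proof (tri_sq (S N)). nia. Qed.

Lemma E4 N j : (j <= N)%nat ->
  (4 * tri (N - j) + 2 * (N - j) + 4 * tri (S N) = 4 * N * (N - j) + (2 * (j * j) + 2 * N))%nat.
Proof.
  intro h. set (k := (N - j)%nat). replace N with (k + j)%nat by (unfold k; lia).
  pose proof (tri_sq k). pose proof (tri_sq (S (k + j))). nia.
Qed.

Lemma powcancel (q : C) A B C0 D0 : q <> RtoC 0 -> (A + C0 = B + D0)%nat ->
  (q ^ A * / q ^ B * q ^ C0 = q ^ D0)%C.
Proof.
  intros hq h. assert (q ^ A * q ^ C0 = q ^ B * q ^ D0)%C by (rewrite <- !Cpow_add_r, h; reflexivity).
  assert ((q ^ B)%C <> RtoC 0) by (apply Cpow_nz; auto).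
  apply (Cmult_eq_reg_l (q ^ B)); auto. rewrite <- H. field. auto.
Qed.

Lemma rev_block (p a : C) N : p <> RtoC 0 -> a <> RtoC 0 ->
  (qp (a / p ^ N) p N * p ^ (tri (S N)) = (- a) ^ N * qp (p / a) p N)%C.
Proof.
  intros hp ha. induction N.
  - simpl. ring.
  - rewrite qp_shift. replace (a / p ^ S N * p)%C with (a / p ^ N)%C.
    2: { rewrite Cpow_S. field. split; auto. apply Cpow_nz; auto. }
    replace (tri (S (S N))) with (tri (S N) + S N)%nat by reflexivity. rewrite Cpow_add_r.
    replace ((1 - a / p ^ S N) * qp (a / p ^ N) p N * (p ^ tri (S N) * p ^ S N))%C
      with ((p ^ S N - a) * (qp (a / p ^ N) p N * p ^ tri (S N)))%C.
    2: { field. apply Cpow_nz; auto. }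
    rewrite IHN, qp_S. rewrite !Cpow_S. field. auto.
Qed.

Lemma sign_sub N j : (j <= N)%nat -> ((- 1) ^ (N - j) = (- 1) ^ N * (- 1) ^ j)%C.
Proof.
  intro h. replace ((- 1) ^ N)%C with ((- 1) ^ (N - j) * (-1) ^ j)%C by (rewrite <- Cpow_add_r; f_equal; lia).
  rewrite <- Cmult_assoc, <- Cpow_add_r. replace (j + j)%nat with (2 * j)%nat by lia.
  rewrite Cpow_mult_r. replace ((- 1) ^ 2)%C with (RtoC 1) by (simpl; ring). rewrite Cpow_1_l. ring.
Qed.

Lemma J1fin q N : q <> RtoC 0 -> Cmod q < 1 ->
  psum (fun j => Gb q (N + S N) (S N + j) * q ^ tri (S j))%C (S N) = (qp (- q) q N * qp (- q) q N)%C.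
Proof.
  intros hq hq1.
  pose proof (rothe q hq1 (N + S N) (/ q ^ N)%C) as R.
  assert (hqN : (q ^ N)%C <> RtoC 0) by (apply Cpow_nz; auto).
  set (T := (q ^ tri (S N))%C).
  assert (HL : (qp (- / q ^ N) q (N + S N) * T = 2 * (qp (- q) q N * qp (- q) q N))%C).
  { rewrite qp_add. replace (- / q ^ N * q ^ N)%C with (RtoC (-1)) by (field; auto).
    rewrite qp_shift. replace (- / q ^ N)%C with (-1 / q ^ N)%C by (field; auto).
    replace (qp (-1 / q ^ N) q N * ((1 - -1) * qp (-1 * q) q N) * T)%C
      with ((qp (-1 / q ^ N) q N * T) * ((1 - -1) * qp (-1 * q) q N))%C by ring.
    unfold T. rewrite rev_block by (auto; intro h; injection h; lra).
    replace (- -1)%C with (RtoC 1) by ring. rewrite Cpow_1_l.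
    replace (q / -1)%C with (- q)%C by field. replace (-1 * q)%C with (- q)%C by ring. ring. }
  assert (HR : (psum (fun k => Gb q (N + S N) k * q ^ tri k * (/ q ^ N) ^ k)%C (S (N + S N)) * T =
                2 * psum (fun j => Gb q (N + S N) (S N + j) * q ^ tri (S j))%C (S N))%C).
  { replace (S (N + S N)) with (S N + S N)%nat by lia. rewrite psum_split.
    rewrite (psum_rev _ (S N)).
    rewrite Cmult_plus_distr_r.
    rewrite !(Cmult_comm _ T). rewrite <- !psum_scal.
    rewrite (psum_ext _ (fun j => Gb q (N + S N) (S N + j) * q ^ tri (S j))%C).
    2: { intros i hi. replace (S N - 1 - i)%nat with (N - i)%nat by lia.
         rewrite <- (Gb_sym q (N + S N) (S N + i)) by lia.
         replace (N + S N - (S N + i))%nat with (N - i)%nat by lia.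
         rewrite Cpow_inv by auto. rewrite <- Cpow_mult_r. unfold T.
         replace (Gb q (N + S N) (N - i) * q ^ tri (N - i) * / q ^ (N * (N - i)))%C with
           (Gb q (N + S N) (N - i) * (q ^ tri (N - i) * / q ^ (N * (N - i))))%C by ring.
         rewrite <- (powcancel q (tri (N - i)) (N * (N - i)) (tri (S N)) (tri (S i))) by (auto; apply E2; lia).
         ring. }
    rewrite (psum_ext (fun i => T * (Gb q (N + S N) (S N + i) * q ^ tri (S N + i) * (/ q ^ N) ^ (S N + i)))%C
                      (fun j => Gb q (N + S N) (S N + j) * q ^ tri (S j))%C).
    2: { intros i hi. rewrite Cpow_inv by auto. rewrite <- Cpow_mult_r. unfold T.
         rewrite <- (powcancel q (tri (S N + i)) (N * (S N + i)) (tri (S N)) (tri (S i))) by (auto; apply E1).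
         ring. }
    rewrite psum_scal. ring. }
  rewrite R in HL. rewrite HR in HL.
  apply (Cmult_eq_reg_l 2). intro h. injection h; lra. exact HL.
Qed.

Lemma J2term q N k j : q <> RtoC 0 ->
  (4 * tri k + 2 * k + 4 * tri (S N) = 4 * N * k + (2 * (j * j) + 2 * N))%nat ->
  ((q ^ 4) ^ (tri k) * (- (q ^ 2 * / (q ^ 4) ^ N)) ^ k * q ^ (4 * tri (S N)) =
   (- 1) ^ k * q ^ (2 * (j * j)) * q ^ (2 * N))%C.
Proof.
  intros hq h.
  replace (- (q ^ 2 * / (q ^ 4) ^ N))%C with ((- 1) * (q ^ 2 * / (q ^ 4) ^ N))%C by ring.
  rewrite !Cpow_mult_l. rewrite Cpow_inv by (apply Cpow_nz; apply Cpow_nz; auto).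
  rewrite <- !Cpow_mult_r.
  pose proof (powcancel q (4 * tri k + 2 * k) (4 * (N * k)) (4 * tri (S N)) (2 * (j * j) + 2 * N) hq ltac:(lia)) as P.
  rewrite !Cpow_add_r in P.
  transitivity ((- 1) ^ k * (q ^ (4 * tri k) * q ^ (2 * k) * / q ^ (4 * (N * k)) * q ^ (4 * tri (S N))))%C.
  - ring.
  - rewrite P. ring.
Qed.

Lemma J2fin q N : q <> RtoC 0 -> Cmod q < 1 ->
  (2 * psum (fun j => (- 1) ^ j * Gb (q ^ 4) (N + N) (N + j) * q ^ (2 * (j * j))) (S N)
     - Gb (q ^ 4) (N + N) N)%C = (qp (q ^ 2) (q ^ 4) N * qp (q ^ 2) (q ^ 4) N)%C.
Proof.
  intros hq hq1.
  assert (hp : Cmod (q ^ 4)%C < 1).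
  { rewrite Cmod_pow. pose proof (Cmod_ge_0 q). apply pow_lt_1_compat; [lra|lia]. }
  assert (hp0 : (q ^ 4)%C <> RtoC 0) by (apply Cpow_nz; auto).
  assert (hpN : ((q ^ 4) ^ N)%C <> RtoC 0) by (apply Cpow_nz; auto).
  assert (hq2 : (q ^ 2)%C <> RtoC 0) by (apply Cpow_nz; auto).
  pose proof (rothe (q ^ 4) hp (N + N) (- (q ^ 2 * / (q ^ 4) ^ N))%C) as R.
  replace (- - (q ^ 2 * / (q ^ 4) ^ N))%C with (q ^ 2 * / (q ^ 4) ^ N)%C in R by ring.
  set (T := (q ^ (4 * tri (S N)))%C).
  set (S0 := ((- 1) ^ N * q ^ (2 * N))%C).
  assert (HL : (qp (q ^ 2 * / (q ^ 4) ^ N) (q ^ 4) (N + N) * T = S0 * (qp (q ^ 2) (q ^ 4) N * qp (q ^ 2) (q ^ 4) N))%C).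
  { rewrite qp_add. replace (q ^ 2 * / (q ^ 4) ^ N * (q ^ 4) ^ N)%C with (q ^ 2)%C by (field; auto).
    replace (qp (q ^ 2 * / (q ^ 4) ^ N) (q ^ 4) N * qp (q ^ 2) (q ^ 4) N * T)%C
      with ((qp (q ^ 2 * / (q ^ 4) ^ N) (q ^ 4) N * (q ^ 4) ^ tri (S N)) * qp (q ^ 2) (q ^ 4) N)%C.
    2: { unfold T. rewrite Cpow_mult_r. ring. }
    change (q ^ 2 * / (q ^ 4) ^ N)%C with (q ^ 2 / (q ^ 4) ^ N)%C. rewrite rev_block by auto. replace (q ^ 4 / q ^ 2)%C with (q ^ 2)%C by (simpl; field; auto).
    unfold S0. replace (- q ^ 2)%C with ((- 1) * q ^ 2)%C by ring. rewrite Cpow_mult_l, <- Cpow_mult_r. ring. }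
  set (b := fun j => ((- 1) ^ j * Gb (q ^ 4) (N + N) (N + j) * q ^ (2 * (j * j)))%C).
  assert (HR : (psum (fun k => Gb (q ^ 4) (N + N) k * (q ^ 4) ^ tri k * (- (q ^ 2 * / (q ^ 4) ^ N)) ^ k)%C (S (N + N)) * T
                = S0 * (2 * psum b (S N) - Gb (q ^ 4) (N + N) N))%C).
  { replace (S (N + N)) with (N + S N)%nat by lia. rewrite psum_split.
    rewrite (psum_rev _ N).
    rewrite Cmult_plus_distr_r. rewrite !(Cmult_comm _ T). rewrite <- !psum_scal.
    rewrite (psum_ext _ (fun i => S0 * b (S i))%C).
    2: { intros i hi. replace (N - 1 - i)%nat with (N - S i)%nat by lia.
         replace (Gb (q ^ 4) (N + N) (N - S i)) with (Gb (q ^ 4) (N + N) (N + S i))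
           by (rewrite <- (Gb_sym (q ^ 4) (N + N) (N + S i)) by lia; f_equal; lia).
         replace (T * (Gb (q ^ 4) (N + N) (N + S i) * (q ^ 4) ^ tri (N - S i) * (- (q ^ 2 * / (q ^ 4) ^ N)) ^ (N - S i)))%C
           with (Gb (q ^ 4) (N + N) (N + S i) * ((q ^ 4) ^ tri (N - S i) * (- (q ^ 2 * / (q ^ 4) ^ N)) ^ (N - S i) * T))%C by ring.
         unfold T. rewrite (J2term q N (N - S i) (S i)) by (auto; apply E4; lia).
         rewrite sign_sub by lia. unfold b, S0. ring. }
    rewrite (psum_ext (fun i => T * (Gb (q ^ 4) (N + N) (N + i) * (q ^ 4) ^ tri (N + i) * (- (q ^ 2 * / (q ^ 4) ^ N)) ^ (N + i)))%C
                      (fun i => S0 * b i)%C).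
    2: { intros i hi.
         replace (T * (Gb (q ^ 4) (N + N) (N + i) * (q ^ 4) ^ tri (N + i) * (- (q ^ 2 * / (q ^ 4) ^ N)) ^ (N + i)))%C
           with (Gb (q ^ 4) (N + N) (N + i) * ((q ^ 4) ^ tri (N + i) * (- (q ^ 2 * / (q ^ 4) ^ N)) ^ (N + i) * T))%C by ring.
         unfold T. rewrite (J2term q N (N + i) i) by (auto; apply E3).
         rewrite Cpow_add_r. unfold b, S0. ring. }
    assert (Hb0 : b O = Gb (q ^ 4) (N + N) N) by (unfold b; rewrite Nat.add_0_r; simpl; ring).
    rewrite !psum_scal. rewrite (psum_first b N). rewrite Hb0. ring. }
  rewrite R, HR in HL.
  assert (S0 <> RtoC 0).
  { unfold S0. apply Cmult_neq_0; apply Cpow_nz; auto. intro h. injection h. lra. }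
  apply (Cmult_eq_reg_l S0); auto.
Qed.


Lemma cv_sub' u a (h : nat -> nat) : (forall M, exists N0, forall N, (N >= N0)%nat -> (h N >= M)%nat) ->
  cv u a -> cv (fun n => u (h n)) a.
Proof.
  intros Hh H e he. destruct (H e he) as [N HN]. destruct (Hh N) as [N0 H0]. exists N0.
  intros n hn. apply HN. apply H0. auto.
Qed.

Lemma pow_decr (r : R) (m n : nat) : 0 <= r <= 1 -> (n <= m)%nat -> r ^ m <= r ^ n.
Proof.
  intros hr h. replace m with (n + (m - n))%nat by lia. rewrite pow_add.
  pose proof (pow_le r n ltac:(lra)). pose proof (pow_le_one r (m - n) hr). nra.
Qed.

Lemma Gb_bound p : Cmod p < 1 -> exists B, B >= 0 /\ forall n k, Cmod (Gb p n k) <= B.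
Proof.
  intro hp. destruct (qp_lower_pos p hp) as [c [hc Hc]].
  set (M := exp (Cmod p / (1 - Cmod p))).
  assert (HM : 0 < M) by apply exp_pos.
  exists (M / (c * c)). split. { left. apply Rdiv_lt_0_compat; nra. }
  intros n k. unfold Gb. destruct (Nat.leb_spec k n).
  - rewrite Cmod_div. 2: { apply Cmult_neq_0; apply qp_nz; auto. }
    rewrite Cmod_mult. pose proof (Hc k). pose proof (Hc (n - k)%nat). pose proof (qp_bound p p hp n).
    fold M in H2. pose proof (Cmod_ge_0 (qp p p n)).
    unfold Rdiv. apply Rmult_le_compat; auto.
    + left. apply Rinv_0_lt_compat. nra.
    + apply Rinv_le_contravar. nra. apply Rmult_le_compat; lra.
  - rewrite Cmod_0. left. apply Rdiv_lt_0_compat; nra.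
Qed.

Lemma tends_inf_add (f g : nat -> nat) : (forall N, (f N >= N)%nat) -> forall M, exists N0, forall N, (N >= N0)%nat -> (f N >= M)%nat.
Proof. intros H M. exists M. intros N hN. specialize (H N). lia. Qed.

Lemma Gb_lim p (n k : nat -> nat) j0 : Cmod p < 1 ->
  (forall N, (N >= j0)%nat -> (k N <= n N)%nat) ->
  (forall M, exists N0, forall N, (N >= N0)%nat -> (n N >= M)%nat) ->
  (forall M, exists N0, forall N, (N >= N0)%nat -> (k N >= M)%nat) ->
  (forall M, exists N0, forall N, (N >= N0)%nat -> (n N - k N >= M)%nat) ->
  cv (fun N => Gb p (n N) (k N)) (/ qpinf p p)%C.
Proof.
  intros hp hkn hn hk hnk. destruct (qp_cv p p hp) as [HQ _].
  pose proof (qpinf_nz p hp) as hQ.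
  apply (cv_ext_ev (fun N => qp p p (n N) / (qp p p (k N) * qp p p (n N - k N)%nat))%C _ _ j0).
  { intros N hN. unfold Gb. destruct (Nat.leb_spec (k N) (n N)); [reflexivity|]. specialize (hkn N hN). lia. }
  replace (/ qpinf p p)%C with (qpinf p p / (qpinf p p * qpinf p p))%C by (field; auto).
  apply cv_div.
  - apply (cv_sub' _ _ n); auto.
  - apply cv_mult; apply (cv_sub' _ _); auto.
  - apply Cmult_neq_0; auto.
Qed.

Lemma sumC_eq f L : cv (psum f) L -> sumC f = L.
Proof. intro H. unfold sumC. apply lim_eq. auto. Qed.

Lemma sumC_scal c f : (exists L, cv (psum f) L) -> sumC (fun i => c * f i)%C = (c * sumC f)%C.
Proof.
  intros [L H]. rewrite (sumC_eq f L H). apply sumC_eq.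
  apply (cv_ext (fun n => c * psum f n)%C). intro n. rewrite psum_scal. reflexivity. apply cv_scal. auto.
Qed.

Lemma tannery_S (a : nat -> nat -> C) (b : nat -> C) K r : 0 <= r < 1 ->
  (forall N j, Cmod (a N j) <= K * r ^ j) -> (forall j, cv (fun N => a N j) (b j)) ->
  cv (fun N => psum (a N) (S N)) (sumC b).
Proof.
  intros hr HA HC. pose proof (tannery a b K r hr HA HC) as T.
  replace (sumC b) with (sumC b + 0)%C by ring.
  apply (cv_ext (fun N => psum (a N) N + a N N)%C). { intro; reflexivity. }
  apply cv_plus; auto.
  intros e he. assert (HK : 0 <= K). { specialize (HA O O). simpl in HA. pose proof (Cmod_ge_0 (a O O)). lra. }
  destruct (pow_small r (e / (K + 1)) hr) as [N HN]. { apply Rdiv_lt_0_compat; lra. }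
  exists N. intros n hn. replace (a n n - 0)%C with (a n n) by ring.
  eapply Rle_lt_trans; [apply HA|]. specialize (HN n hn).
  apply Rle_lt_trans with ((K + 1) * r ^ n). { apply Rmult_le_compat_r. apply pow_le; lra. lra. }
  apply Rmult_lt_reg_l with (/ (K + 1)). { apply Rinv_0_lt_compat; lra. }
  rewrite <- Rmult_assoc, Rinv_l by lra. rewrite Rmult_1_l.
  eapply Rlt_le_trans; [apply HN|]. right. field. lra.
Qed.

Lemma Cmod_lt1_pow (q : C) n : Cmod q < 1 -> Cmod (q ^ S n)%C < 1.
Proof. intro h. rewrite Cmod_pow. pose proof (Cmod_ge_0 q). apply pow_lt_1_compat; [lra|lia]. Qed.

Lemma Cmod_m1pow n : Cmod ((- 1) ^ n)%C = 1.
Proof. rewrite Cmod_pow. replace (Cmod (- 1)%C) with 1. apply pow1.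
  rewrite Cmod_R. rewrite Rabs_left; lra. Qed.

Definition psi (q : C) : C := sumC (fun j => q ^ tri (S j))%C.
Definition g0 (q : C) : C := sumC (fun j => (- 1) ^ j * q ^ (2 * (j * j)))%C.

Lemma tri_ge k : (k <= tri (S k))%nat.
Proof. induction k; simpl in *; lia. Qed.

Lemma psi_cv q : Cmod q < 1 -> cv (psum (fun j => q ^ tri (S j))%C) (psi q).
Proof.
  intro hq. pose proof (Cmod_ge_0 q).
  assert (HH : forall i, Cmod (q ^ tri (S i))%C <= 1 * Cmod q ^ i).
  { intro i. rewrite Cmod_pow, Rmult_1_l. apply pow_decr. lra. apply tri_ge. }
  destruct (sum_geom _ 1 (Cmod q) ltac:(lra) HH) as [H1 _]. exact H1.
Qed.

Lemma g0_cv q : Cmod q < 1 -> cv (psum (fun j => (- 1) ^ j * q ^ (2 * (j * j)))%C) (g0 q).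
Proof.
  intro hq. pose proof (Cmod_ge_0 q).
  assert (HH : forall i, Cmod ((- 1) ^ i * q ^ (2 * (i * i)))%C <= 1 * Cmod q ^ i).
  { intro i. rewrite Cmod_mult, Cmod_m1pow, !Cmod_pow, !Rmult_1_l. apply pow_decr. lra. nia. }
  destruct (sum_geom _ 1 (Cmod q) ltac:(lra) HH) as [H1 _]. exact H1.
Qed.

Lemma J1lim q : q <> RtoC 0 -> Cmod q < 1 ->
  (/ qpinf q q * psi q)%C = (qpinf (- q) q * qpinf (- q) q)%C.
Proof.
  intros hq0 hq. pose proof (Cmod_ge_0 q).
  destruct (Gb_bound q hq) as [B [HB0 HB]].
  assert (T := tannery_S (fun N j => Gb q (N + S N) (S N + j) * q ^ tri (S j))%C
                         (fun j => / qpinf q q * q ^ tri (S j))%C B (Cmod q) ltac:(lra)).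
  rewrite sumC_scal in T. 2: { exists (psi q). apply psi_cv; auto. }
  fold (psi q) in T.
  apply (cv_unique (fun N => psum (fun j => Gb q (N + S N) (S N + j) * q ^ tri (S j))%C (S N))).
  - apply T.
    + intros N j. rewrite Cmod_mult, Cmod_pow. apply Rmult_le_compat; auto. apply Cmod_ge_0. apply pow_le; lra.
      apply pow_decr. lra. apply tri_ge.
    + intro j. apply cv_mult; [|apply cv_const]. apply (Gb_lim q (fun N => N + S N)%nat (fun N => S N + j)%nat j hq).
      * intros; lia.
      * apply tends_inf_add; auto. intros; lia.
      * apply tends_inf_add; auto. intros; lia.
      * intro M. exists (M + j)%nat. intros N hN. lia.
  - apply (cv_ext (fun N => qp (- q) q N * qp (- q) q N)%C). { intro N. rewrite J1fin; auto. }
    destruct (qp_cv (- q) q hq) as [H1 _]. apply cv_mult; auto.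
Qed.

Lemma J2lim q : q <> RtoC 0 -> Cmod q < 1 ->
  (2 * (/ qpinf (q ^ 4) (q ^ 4) * g0 q) - / qpinf (q ^ 4) (q ^ 4))%C =
  (qpinf (q ^ 2) (q ^ 4) * qpinf (q ^ 2) (q ^ 4))%C.
Proof.
  intros hq0 hq. pose proof (Cmod_ge_0 q).
  assert (hq4 : Cmod (q ^ 4)%C < 1) by (apply Cmod_lt1_pow; auto).
  destruct (Gb_bound (q ^ 4)%C hq4) as [B [HB0 HB]].
  assert (T := tannery_S (fun N j => (- 1) ^ j * Gb (q ^ 4) (N + N) (N + j) * q ^ (2 * (j * j)))%C
                         (fun j => / qpinf (q ^ 4) (q ^ 4) * ((- 1) ^ j * q ^ (2 * (j * j))))%C B (Cmod q) ltac:(lra)).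
  rewrite sumC_scal in T. 2: { exists (g0 q). apply g0_cv; auto. }
  fold (g0 q) in T.
  apply (cv_unique (fun N => 2 * psum (fun j => (- 1) ^ j * Gb (q ^ 4) (N + N) (N + j) * q ^ (2 * (j * j)))%C (S N)
                              - Gb (q ^ 4) (N + N) N)%C).
  - apply cv_minus. apply cv_scal. apply T.
    + intros N j. rewrite !Cmod_mult, Cmod_m1pow, !Cmod_pow, Rmult_1_l.
      apply Rmult_le_compat; auto. apply Cmod_ge_0. apply pow_le; lra.
      apply pow_decr. lra. nia.
    + intro j. apply (cv_ext (fun N => ((- 1) ^ j * q ^ (2 * (j * j))) * Gb (q ^ 4) (N + N) (N + j))%C).
      { intro; ring. }
      replace (/ qpinf (q ^ 4) (q ^ 4) * ((- 1) ^ j * q ^ (2 * (j * j))))%C with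
        (((- 1) ^ j * q ^ (2 * (j * j))) * / qpinf (q ^ 4) (q ^ 4))%C by ring.
      apply cv_scal. apply (Gb_lim (q ^ 4) (fun N => N + N)%nat (fun N => N + j)%nat j hq4).
      * intros; lia.
      * apply tends_inf_add; auto. intros; lia.
      * apply tends_inf_add; auto. intros; lia.
      * intro M. exists (M + j)%nat. intros N hN. lia.
    + apply (Gb_lim (q ^ 4) (fun N => N + N)%nat (fun N => N)%nat O hq4).
      * intros; lia.
      * apply tends_inf_add; auto. intros; lia.
      * apply tends_inf_add; auto.
      * intro M. exists M. intros N hN. lia.
  - apply (cv_ext (fun N => qp (q ^ 2) (q ^ 4) N * qp (q ^ 2) (q ^ 4) N)%C). { intro N. rewrite J2fin; auto. }
    destruct (qp_cv (q ^ 2) (q ^ 4) hq4) as [H1 _]. apply cv_mult; auto.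
Qed.


Section Prods.
Variable q : C.
Hypothesis hq : Cmod q < 1.

Let hq2 : Cmod (q ^ 2)%C < 1. Proof. apply Cmod_lt1_pow; auto. Qed.
Let hq4 : Cmod (q ^ 4)%C < 1. Proof. apply Cmod_lt1_pow; auto. Qed.

Lemma cv_double a p : Cmod p < 1 -> cv (fun n => qp a p (n + n)) (qpinf a p).
Proof. intro hp. destruct (qp_cv a p hp) as [H _]. apply (cv_sub _ _ (fun n => n + n)%nat); auto. intros; lia. Qed.

Lemma P1 : qpinf q q = (qpinf q (q ^ 2) * qpinf (q ^ 2) (q ^ 2))%C.
Proof.
  apply (cv_unique (fun n => qp q q (n + n))). apply cv_double; auto.
  apply (cv_ext (fun n => qp q (q ^ 2) n * qp (q ^ 2) (q ^ 2) n)%C).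
  { intro n. rewrite qp_double. replace (q * q)%C with (q ^ 2)%C by ring. reflexivity. }
  apply cv_mult; apply qp_cv; auto.
Qed.

Lemma P2 : (qpinf q q * qpinf (- q) q)%C = qpinf (q ^ 2) (q ^ 2).
Proof.
  apply (cv_unique (fun n => qp q q n * qp (- q) q n)%C). apply cv_mult; apply qp_cv; auto.
  apply (cv_ext (fun n => qp (q ^ 2) (q ^ 2) n)). { intro n. rewrite qp_pm. replace (q * q)%C with (q ^ 2)%C by ring. reflexivity. }
  apply qp_cv; auto.
Qed.

Lemma P3 : qpinf (q ^ 2) (q ^ 2) = (qpinf (q ^ 2) (q ^ 4) * qpinf (q ^ 4) (q ^ 4))%C.
Proof.
  apply (cv_unique (fun n => qp (q ^ 2) (q ^ 2) (n + n))). apply cv_double; auto.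
  apply (cv_ext (fun n => qp (q ^ 2) (q ^ 4) n * qp (q ^ 4) (q ^ 4) n)%C).
  { intro n. rewrite qp_double. replace (q ^ 2 * q ^ 2)%C with (q ^ 4)%C by ring. reflexivity. }
  apply cv_mult; apply qp_cv; auto.
Qed.

Lemma P4 : (qpinf (q ^ 2) (q ^ 2) * qpinf (- q ^ 2) (q ^ 2))%C = qpinf (q ^ 4) (q ^ 4).
Proof.
  apply (cv_unique (fun n => qp (q ^ 2) (q ^ 2) n * qp (- q ^ 2) (q ^ 2) n)%C). apply cv_mult; apply qp_cv; auto.
  apply (cv_ext (fun n => qp (q ^ 4) (q ^ 4) n)). { intro n. rewrite qp_pm. replace (q ^ 2 * q ^ 2)%C with (q ^ 4)%C by ring. reflexivity. }
  apply qp_cv; auto.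
Qed.

Lemma OM : (qpinf q (q ^ 2) * qpinf (- q) q)%C = RtoC 1.
Proof.
  pose proof (qpinf_nz (q ^ 2) hq2) as hY.
  apply (Cmult_eq_reg_l (qpinf (q ^ 2) (q ^ 2))); auto.
  rewrite <- P2 at 2. rewrite P1. ring.
Qed.

Lemma O4E : (qpinf (q ^ 2) (q ^ 4) * qpinf (- q ^ 2) (q ^ 2))%C = RtoC 1.
Proof.
  pose proof (qpinf_nz (q ^ 4) hq4) as hQ.
  apply (Cmult_eq_reg_l (qpinf (q ^ 4) (q ^ 4))); auto.
  rewrite <- P4 at 2. rewrite P3. ring.
Qed.

Lemma PsiO : q <> RtoC 0 -> (psi q * qpinf q (q ^ 2))%C = qpinf (q ^ 2) (q ^ 2).
Proof.
  intro hq0. pose proof (J1lim q hq0 hq) as J. pose proof (qpinf_nz q hq) as hQ.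
  assert (psi q = qpinf q q * (qpinf (- q) q * qpinf (- q) q))%C.
  { rewrite <- J. field. auto. }
  rewrite H. rewrite <- P2. transitivity (qpinf q q * qpinf (- q) q * (qpinf q (q ^ 2) * qpinf (- q) q))%C. ring.
  rewrite OM. ring.
Qed.

Lemma PhiE : q <> RtoC 0 -> ((2 * g0 q - 1) * qpinf (- q ^ 2) (q ^ 2))%C = qpinf (q ^ 2) (q ^ 2).
Proof.
  intro hq0. pose proof (J2lim q hq0 hq) as J. pose proof (qpinf_nz (q ^ 4) hq4) as hQ.
  assert ((2 * g0 q - 1) = qpinf (q ^ 4) (q ^ 4) * (qpinf (q ^ 2) (q ^ 4) * qpinf (q ^ 2) (q ^ 4)))%C.
  { rewrite <- J. field. auto. }
  rewrite H. rewrite P3. transitivity (qpinf (q ^ 4) (q ^ 4) * qpinf (q ^ 2) (q ^ 4) * (qpinf (q ^ 2) (q ^ 4) * qpinf (- q ^ 2) (q ^ 2)))%C. ring.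
  rewrite O4E. ring.
Qed.

End Prods.


Lemma cv_zero_bound u K r : 0 <= r < 1 -> (forall n, Cmod (u n) <= K * r ^ n) -> cv u (RtoC 0).
Proof.
  intros hr H e he. assert (HK : 0 <= K). { specialize (H O). simpl in H. pose proof (Cmod_ge_0 (u O)). lra. }
  destruct (pow_small r (e / (K + 1)) hr) as [N HN]. { apply Rdiv_lt_0_compat; lra. }
  exists N. intros n hn. replace (u n - 0)%C with (u n) by ring.
  eapply Rle_lt_trans; [apply H|]. specialize (HN n hn).
  apply Rle_lt_trans with ((K + 1) * r ^ n). { apply Rmult_le_compat_r. apply pow_le; lra. lra. }
  apply Rmult_lt_reg_l with (/ (K + 1)). { apply Rinv_0_lt_compat; lra. }
  rewrite <- Rmult_assoc, Rinv_l by lra. rewrite Rmult_1_l.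
  eapply Rlt_le_trans; [apply HN|]. right. field. lra.
Qed.

Lemma psum_tele' (D : nat -> C) N : psum (fun n => D n - D (S n))%C N = (D O - D N)%C.
Proof. induction N; simpl. ring. rewrite IHN. ring. Qed.

Section Dbl.
Variable q : C.
Hypothesis hq : Cmod q < 1.

Definition gg (y : C) : C := sumC (fun m => (- 1) ^ m * q ^ (2 * (m * m)) * y ^ m)%C.

Lemma gg_cv y : Cmod y <= 1 -> cv (psum (fun m => (- 1) ^ m * q ^ (2 * (m * m)) * y ^ m)%C) (gg y)
  /\ Cmod (gg y) <= 1 / (1 - Cmod q).
Proof.
  intro hy. pose proof (Cmod_ge_0 q).
  assert (HH : forall i, Cmod ((- 1) ^ i * q ^ (2 * (i * i)) * y ^ i)%C <= 1 * Cmod q ^ i).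
  { intro i. rewrite !Cmod_mult, Cmod_m1pow, !Cmod_pow, !Rmult_1_l.
    pose proof (pow_le (Cmod y) i (Cmod_ge_0 y)). pose proof (pow_le_one (Cmod y) i (conj (Cmod_ge_0 y) hy)).
    pose proof (pow_decr (Cmod q) (2 * (i * i)) i ltac:(lra) ltac:(nia)).
    pose proof (pow_le (Cmod q) (2 * (i * i)) H). nra. }
  destruct (sum_geom _ 1 (Cmod q) ltac:(lra) HH) as [H1 _]. split. exact H1.
  replace (gg y) with (gg y - 0)%C by ring. apply (cv_le_bound _ _ _ _ O H1).
  intros n _. replace (psum (fun m => (- 1) ^ m * q ^ (2 * (m * m)) * y ^ m)%C n - 0)%C with
    (psum (fun m => (- 1) ^ m * q ^ (2 * (m * m)) * y ^ m)%C n) by ring.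
  apply psum_bound; [lra | exact HH].
Qed.

Lemma gg_rec y : Cmod y <= 1 -> gg y = (1 - q ^ 2 * y * gg (q ^ 4 * y))%C.
Proof.
  intro hy. pose proof (Cmod_ge_0 q).
  assert (hy4 : Cmod (q ^ 4 * y)%C <= 1).
  { rewrite Cmod_mult, Cmod_pow. pose proof (pow_le_one (Cmod q) 4 ltac:(lra)). pose proof (Cmod_ge_0 y).
    pose proof (pow_le (Cmod q) 4 H). nra. }
  destruct (gg_cv y hy) as [H1 _]. destruct (gg_cv _ hy4) as [H2 _].
  apply (cv_unique (fun n => psum (fun m => (- 1) ^ m * q ^ (2 * (m * m)) * y ^ m)%C (S n))).
  - apply (cv_sub _ _ S); auto.
  - apply (cv_ext (fun n => 1 + (- (q ^ 2 * y)) * psum (fun m => (- 1) ^ m * q ^ (2 * (m * m)) * (q ^ 4 * y) ^ m)%C n)%C).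
    + intro n. rewrite psum_first. rewrite <- psum_scal. f_equal.
      * simpl. ring.
      * apply psum_ext. intros i _.
        replace (2 * (S i * S i))%nat with (2 * (i * i) + 4 * i + 2)%nat by nia.
        rewrite !Cpow_add_r, !Cpow_mult_l, Cpow_S. rewrite <- Cpow_mult_r.
        rewrite !Cpow_S. ring.
    + replace (1 - q ^ 2 * y * gg (q ^ 4 * y))%C with (1 + (- (q ^ 2 * y)) * gg (q ^ 4 * y))%C by ring.
      apply cv_plus. apply cv_const. apply cv_scal. auto.
Qed.

Definition gd (j : nat) : C := gg ((q ^ 2) ^ j)%C.

Lemma gd_le1 j : Cmod ((q ^ 2) ^ j)%C <= 1.
Proof. rewrite !Cmod_pow. pose proof (Cmod_ge_0 q). apply pow_le_one. split. apply pow_le; lra.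
  apply pow_le_one; lra. Qed.

Lemma gd_rec j : gd j = (1 - q ^ 2 * (q ^ 2) ^ j * gd (S (S j)))%C.
Proof. unfold gd. rewrite gg_rec by apply gd_le1. do 3 f_equal. simpl. ring. Qed.

Lemma gd_bound j : Cmod (gd j) <= 1 / (1 - Cmod q).
Proof. apply gg_cv. apply gd_le1. Qed.

Lemma gd0 : gd O = g0 q.
Proof. unfold gd, gg, g0. f_equal. apply functional_extensionality. intro m. simpl. rewrite Cpow_1_l. ring. Qed.

Lemma inner_eq D n :
  sumC (fun m => (- (RtoC 1)) ^ m * (q ^ (D + 2 * n * m + 2 * m * m + 2 * m) * (1 + q ^ (2 * m + 1))))%C
  = (q ^ D * (gd (S n) + q * gd (S (S n))))%C.
Proof.
  apply sumC_eq.
  destruct (gg_cv _ (gd_le1 (S n))) as [H1 _]. destruct (gg_cv _ (gd_le1 (S (S n)))) as [H2 _].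
  apply (cv_ext (fun N => q ^ D * (psum (fun m => (- 1) ^ m * q ^ (2 * (m * m)) * ((q ^ 2) ^ S n) ^ m)%C N
                                    + q * psum (fun m => (- 1) ^ m * q ^ (2 * (m * m)) * ((q ^ 2) ^ S (S n)) ^ m)%C N))%C).
  - intro N. rewrite <- psum_scal, <- psum_add, <- psum_scal. apply psum_ext. intros m _.
    replace (- RtoC 1)%C with (RtoC (-1)) by (unfold RtoC, Complex.Copp; simpl; f_equal; lra).
    rewrite <- !Cpow_mult_r.
    assert (A1 : (q ^ (D + 2 * n * m + 2 * m * m + 2 * m) = q ^ D * q ^ (2 * (m * m)) * q ^ (2 * (S n * m)))%C).
    { rewrite <- !Cpow_add_r. f_equal. nia. }
    assert (A2 : (q ^ (2 * m + 1) * q ^ (2 * (S n * m)) = q * q ^ (2 * (S (S n) * m)))%C).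
    { rewrite <- Cpow_S, <- !Cpow_add_r. f_equal. nia. }
    symmetry. rewrite A1. transitivity (q ^ D * ((- 1) ^ m * q ^ (2 * (m * m)) * q ^ (2 * (S n * m)) +
         (- 1) ^ m * q ^ (2 * (m * m)) * (q ^ (2 * m + 1) * q ^ (2 * (S n * m)))))%C. ring.
    rewrite A2. ring.
  - apply cv_scal. apply cv_plus; auto. apply cv_scal; auto.
Qed.

Definition tt (n : nat) : C := (q ^ tri (S n))%C.
Definition HH (n : nat) : C := (tt n * (- gd n + (q ^ n - 1) * gd (S n) + q ^ (n + 2) * gd (S (S n)) + 2))%C.
Definition sp (n : nat) : C := (q ^ (Nat.div (n * (n + 3)) 2) * (gd (S n) + q * gd (S (S n))))%C.

Lemma d_eq n : Nat.div (n * (n + 3)) 2 = (tri (S n) + n)%nat.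
Proof.
  pose proof (tri_sq (S n)). replace (n * (n + 3))%nat with ((tri (S n) + n) * 2)%nat by nia.
  apply Nat.div_mul. lia.
Qed.

Lemma step n : ((1 + q) * sp n = 2 * tt (S n) + HH n - HH (S n))%C.
Proof.
  unfold sp, HH, tt. rewrite d_eq.
  replace (tri (S (S n))) with (tri (S n) + S n)%nat by reflexivity.
  rewrite (gd_rec n), (gd_rec (S n)).
  assert (Hx : ((q ^ 2) ^ n = q ^ n * q ^ n)%C) by (rewrite <- Cpow_mult_r, <- Cpow_add_r; f_equal; lia).
  replace ((q ^ 2) ^ S n)%C with (q ^ 2 * (q ^ 2) ^ n)%C by reflexivity.
  rewrite Hx. rewrite !Cpow_add_r. replace (S n + 2)%nat with (S (S (S n))) by lia. rewrite !Cpow_S.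
  ring.
Qed.

Lemma psi_shift : cv (psum (fun n => tt (S n))) (psi q - 1)%C.
Proof.
  apply (cv_ext (fun N => psum tt (S N) - 1)%C).
  { intro N. rewrite psum_first. unfold tt at 1. simpl. ring. }
  apply cv_minus; [|apply cv_const]. apply (cv_sub _ _ S); [intros; lia|]. apply psi_cv; auto.
Qed.

Lemma HH_zero : cv HH (RtoC 0).
Proof.
  pose proof (Cmod_ge_0 q). set (G := 1 / (1 - Cmod q)).
  assert (hG : 0 <= G) by (unfold G; apply Rdiv_le_0_compat; lra).
  apply (cv_zero_bound HH (4 * G + 2) (Cmod q)); [lra|]. intro n. unfold HH.
  rewrite Cmod_mult. unfold tt. rewrite Cmod_pow.
  assert (Hb : Cmod (- gd n + (q ^ n - 1) * gd (S n) + q ^ (n + 2) * gd (S (S n)) + 2)%C <= 4 * G + 2).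
  { eapply Rle_trans; [apply Cmod_triangle|]. eapply Rle_trans; [apply Rplus_le_compat_r; apply Cmod_triangle|].
    eapply Rle_trans; [apply Rplus_le_compat_r; apply Rplus_le_compat_r; apply Cmod_triangle|].
    rewrite Cmod_opp, !Cmod_mult, !Cmod_pow.
    pose proof (gd_bound n). pose proof (gd_bound (S n)). pose proof (gd_bound (S (S n))). fold G in H0, H1, H2.
    assert (Cmod (q ^ n - 1)%C <= 2).
    { eapply Rle_trans; [apply Cmod_triangle|]. rewrite Cmod_opp, Cmod_1, Cmod_pow.
      pose proof (pow_le_one (Cmod q) n ltac:(lra)). lra. }
    pose proof (pow_le_one (Cmod q) (n + 2) ltac:(lra)). pose proof (pow_le (Cmod q) (n + 2) H).
    pose proof (Cmod_ge_0 (gd (S n))). pose proof (Cmod_ge_0 (gd (S (S n)))). pose proof (Cmod_ge_0 (q ^ n - 1)%C).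
    replace (Cmod 2) with 2 by (rewrite Cmod_R, Rabs_right; lra).
    assert (Cmod (q ^ n - 1)%C * Cmod (gd (S n)) <= 2 * G) by (apply Rmult_le_compat; lra).
    assert (Cmod q ^ (n + 2) * Cmod (gd (S (S n))) <= 1 * G) by (apply Rmult_le_compat; lra).
    lra. }
  rewrite Rmult_comm. apply Rmult_le_compat; auto. apply Cmod_ge_0. apply pow_le; lra.
  apply pow_decr. lra. apply tri_ge.
Qed.

Lemma onepq : (1 + q)%C <> RtoC 0.
Proof.
  intro h. assert (q = RtoC (-1)) by (replace q with ((1 + q) - 1)%C by ring; rewrite h; unfold RtoC, Cminus, Cplus, Complex.Copp; simpl; f_equal; lra).
  rewrite H in hq. rewrite Cmod_R, Rabs_left in hq; lra.
Qed.

Lemma S_val : sumC sp = ((2 * psi q + 1 - 2 * g0 q) / (1 + q))%C.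
Proof.
  apply sumC_eq. pose proof onepq.
  apply (cv_ext (fun N => / (1 + q) * psum (fun n => (1 + q) * sp n) N)%C).
  { intro N. rewrite psum_scal. field. auto. }
  replace ((2 * psi q + 1 - 2 * g0 q) / (1 + q))%C with (/ (1 + q) * (2 * (psi q - 1) + HH O - 0))%C.
  2: { assert (E0 : (q ^ 2 * gd 2 = 1 - g0 q)%C) by (rewrite <- gd0, (gd_rec O); simpl; ring).
       unfold HH, tt. rewrite gd0. replace (0 + 2)%nat with 2%nat by reflexivity. rewrite E0.
       simpl. field. auto. }
  apply cv_scal.
  apply (cv_ext (fun N => 2 * psum (fun n => tt (S n)) N + HH O - HH N)%C).
  { intro N. induction N. simpl. ring. rewrite !psum_S. rewrite <- IHN. rewrite step. ring. }
  apply cv_minus. apply cv_plus. apply cv_scal. apply psi_shift. apply cv_const. apply HH_zero.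
Qed.

Definition W (k : nat) : C := qpinf (- (q ^ 2) ^ k) (q ^ 2).
Definition DD (k : nat) : C := (qp q (q ^ 2) k * W k)%C.

Lemma hq2' : Cmod (q ^ 2)%C < 1.
Proof. apply Cmod_lt1_pow; auto. Qed.

Lemma W_shift k : W k = ((1 + (q ^ 2) ^ k) * W (S k))%C.
Proof. unfold W. rewrite qpinf_shift by apply hq2'. replace (- (q ^ 2) ^ k * q ^ 2)%C with (- (q ^ 2) ^ S k)%C by (simpl; ring).
  f_equal. ring. Qed.

Lemma W_lim : cv W (RtoC 1).
Proof.
  pose proof (Cmod_ge_0 q). set (s := Cmod q ^ 2).
  assert (hs : 0 <= s < 1) by (unfold s; split; [apply pow_le; lra| apply pow_lt_1_compat; [lra|lia]]).
  intros e he.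
  destruct (pow_small s (Rmin ((1 - s) / 2) (e * (1 - s) / 4)) hs) as [N HN].
  { apply Rmin_pos. lra. apply Rdiv_lt_0_compat; [|lra]. apply Rmult_lt_0_compat; lra. }
  exists N. intros n hn. specialize (HN n hn).
  pose proof (Rmin_l ((1 - s) / 2) (e * (1 - s) / 4)). pose proof (Rmin_r ((1 - s) / 2) (e * (1 - s) / 4)).
  assert (Hc : Cmod (- (q ^ 2) ^ n)%C = s ^ n) by (rewrite Cmod_opp, !Cmod_pow; reflexivity).
  assert (Hp : Cmod (q ^ 2)%C = s) by (rewrite Cmod_pow; reflexivity).
  unfold W. eapply Rle_lt_trans. apply qpinf_near1. apply hq2'.
  - rewrite Hc, Hp. apply Rmult_le_reg_r with (1 - s); [lra|]. unfold Rdiv. rewrite Rmult_assoc, Rinv_l by lra. lra.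
  - rewrite Hc, Hp. apply Rmult_lt_reg_r with (1 - s); [lra|]. unfold Rdiv. rewrite Rmult_assoc, Rinv_l by lra. assert (0 < e * (1 - s)) by (apply Rmult_lt_0_compat; lra). lra.
Qed.

Lemma LHS_val : sumC (fun n => - (q * (q ^ 2) ^ n) * (qp q (q ^ 2) n * W (S n)))%C =
  (- q / (1 + q) * (2 * qpinf (- q ^ 2) (q ^ 2) - qpinf q (q ^ 2)))%C.
Proof.
  apply sumC_eq. pose proof onepq.
  apply (cv_ext (fun N => - q / (1 + q) * (DD O - DD N))%C).
  { intro N. rewrite <- psum_tele', <- psum_scal. apply psum_ext. intros i _. unfold DD.
    rewrite (W_shift i). rewrite qp_S. field. auto. }
  apply cv_scal. apply cv_minus.
  - replace (2 * qpinf (- q ^ 2) (q ^ 2))%C with (DD O).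
    2: { unfold DD, W. change ((q ^ 2) ^ 0)%C with (RtoC 1). change (qp q (q ^ 2) 0) with (RtoC 1).
         rewrite qpinf_shift by apply hq2'. replace (- RtoC 1 * q ^ 2)%C with (- q ^ 2)%C by ring. ring. }
    apply cv_const.
  - replace (qpinf q (q ^ 2)) with (qpinf q (q ^ 2) * 1)%C by ring. apply cv_mult.
    apply qp_cv. apply hq2'. apply W_lim.
Qed.

End Dbl.


Lemma sumC_zero : sumC (fun _ => RtoC 0) = RtoC 0.
Proof. apply sumC_eq. apply (cv_ext (fun _ => RtoC 0)). intro n. rewrite psum_zero. reflexivity. apply cv_const. Qed.

Lemma mq_even (q : C) n : ((- q) ^ (2 * n) = (q ^ 2) ^ n)%C.
Proof. rewrite Cpow_mult_r. f_equal. ring. Qed.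

Theorem mainTheorem5 (q : Cpx) (hq : Cnorm q < 1) :
  F_ed_od (Copp q) =
  Cmul
    (Copp (Cdiv (Cmul q (Cmul (qpoch_inf q q) (qpoch_inf (Copp (Cpow q 2)) (Cpow q 2))))
                (Cpow (qpoch_inf (Cpow q 2) (Cpow q 2)) 2)))
    (Csum (fun n => Csum (fun m =>
       Cmul (Cpow (Copp Cone) m)
            (Cmul (Cpow q (Nat.div (n * (n + 3)) 2 + 2 * n * m + 2 * m * m + 2 * m))
                  (Cadd Cone (Cpow q (2 * m + 1))))))).
Proof.
  assert (Hcs : Csum = sumC) by (extensionality f; apply Csum_sumC).
  assert (Hqi : qpoch_inf = qpinf) by (extensionality a; extensionality p; apply qpoch_inf_qpinf).
  assert (Hqp : qpoch = qp) by (extensionality a; extensionality p; extensionality n; apply qpoch_qp).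
  assert (Hpw : Defs.Cpow = Complex.Cpow) by (extensionality z; extensionality n; apply DCpow_eq).
  unfold F_ed_od. rewrite Hcs, Hqi, Hqp, Hpw.
  change Cnorm with Cmod in hq.
  change Cmul with Cmult. change Cadd with Cplus. change Defs.Copp with Complex.Copp.
  change Defs.Cdiv with Complex.Cdiv. change Cone with (RtoC 1). change Cpx with C in q |- *.
  destruct (Ceq_dec q (RtoC 0)) as [h0 | hq0].
  - subst q. transitivity (RtoC 0).
    + transitivity (sumC (fun _ => RtoC 0)). { f_equal. extensionality n. rewrite Cpow_add_r. simpl. ring. } apply sumC_zero.
    + unfold Complex.Cdiv. ring.
  - transitivity (sumC (fun n => - (q * (q ^ 2) ^ n) * (qp q (q ^ 2) n * W q (S n)))%C).
    { f_equal. extensionality n. unfold W.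
      replace ((- q) ^ 2)%C with (q ^ 2)%C by ring. replace (- - q)%C with q by ring.
      rewrite Cpow_add_r, mq_even. replace (2 * n + 2)%nat with (2 * S n)%nat by lia. rewrite mq_even.
      ring. }
    rewrite (LHS_val q hq).
    transitivity (- (q * (qpinf q q * qpinf (- q ^ 2) (q ^ 2)) / qpinf (q ^ 2) (q ^ 2) ^ 2) * sumC (sp q))%C.
    2: { f_equal. f_equal. extensionality n. unfold sp. symmetry. apply inner_eq; auto. }
    rewrite (S_val q hq). rewrite (P1 q hq).
    pose proof (qpinf_nz (q ^ 2) (Cmod_lt1_pow q 1 hq)) as hY.
    pose proof (onepq q hq) as h1q.
    pose proof (PsiO q hq hq0) as Hpsi. pose proof (PhiE q hq hq0) as Hphi.
    set (Y := qpinf (q ^ 2) (q ^ 2)) in *. set (O := qpinf q (q ^ 2)) in *.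
    set (Ee := qpinf (- q ^ 2) (q ^ 2)) in *.
    transitivity (- q / (1 + q) * (2 * Ee * (psi q * O) - O * ((2 * g0 q - 1) * Ee)) / Y)%C.
    + rewrite Hpsi, Hphi. field. auto.
    + field. auto.
Qed.
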